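(* Under Strategy 1 (described in the context), let $U_h(\omega)$ be the number of uncles created during the attack cycle $\omega$ that are referred by nephew blocks mined by the honest miners, in $\omega$ or in a later cycle. Then $$\mathbb{E}[U_h]=p^2q+\bigl(p+(1-\gamma)p^2q\bigr)\left(\frac{q^2}{p}\bigl(1-q^{n_1-1}\bigr)\gamma+(1-\gamma)pq^2\,\frac{1-(pq)^{n_1-1}}{1-pq}\right).$$
   Context: Honest hashrate $p$, attacker hashrate $q$, $p+q=1$, $0<q<p$; $\gamma\in[0,1]$ is the fraction of honest hashrate mining on the attacker's block during a public competition between equal-height blocks. Attack cycles are i.i.d. words in S (attacker block) and H (honest block): H, SHS, SHH, or SSwH with $w$ a Dyck word; $\mathbb{P}[H]=p$, $\mathbb{P}[SHS]=pq^2$, $\mathbb{P}[SHH]=p^2q$, $\mathbb{P}[SSwH]=q^2p(pq)^{|w|}$ ($|w|$ half the length of $w$). In SHH the second honest block is built on the attacker's block with probability $\gamma$ and on the first honest block with probability $1-\gamma$. Ethereum rules: an uncle is a non-official block whose parent is official; a nephew (official block) may refer an uncle at distance (height difference) at most $n_1$ ($n_1\ge2$ an integer). Strategy 1: the attacker withholds his blocks, and each time the honest miners publish a block he publishes the part of his secret fork of the same height as the public honest chain (a fraction $\gamma$ of honest hashrate then mines on the attacker's branch); the attacker's fork wins in cycles starting with SS; all miners refer all possible uncles. *)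

(* Defs.v *)
From Stdlib Require Import Reals List Arith Bool.
Import ListNotations.

Inductive miner := Att (* S: attacker block *) | Hon (* H: honest block *).

Definition miner_eqb (a b : miner) : bool :=
  match a, b with Att, Att | Hon, Hon => true | _, _ => false end.

Fixpoint dyck_aux (k : nat) (w : list miner) : bool :=
  match w with
  | [] => Nat.eqb k 0
  | Att :: w' => dyck_aux (S k) w'
  | Hon :: w' => match k with O => false | S k' => dyck_aux k' w' end
  end.
Definition is_dyck (w : list miner) : bool := dyck_aux 0 w.

Definition is_cycleb (c : list miner) : bool :=
  match c with
  | [Hon] => true
  | [Att; Hon; Att] => true
  | [Att; Hon; Hon] => true
  | Att :: Att :: r =>
      match r with
      | [] => false
      | _ => miner_eqb (last r Att) Hon && is_dyck (removelast r)
      end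
  | _ => false
  end.

Open Scope R_scope.

Definition cyc_prob (p q : R) (c : list miner) : R :=
  fold_right (fun (m : miner) (acc : R) => (match m with Att => q | Hon => p end) * acc) 1 c.

(* Each honest block of a cycle carries an independent bit: true (prob gamma)
   = "mined on the attacker's branch" when there is a public competition;
   the bit is ignored where no competition occurs (it then integrates to 1). *)
Definition bits_prob (g : R) (bs : list bool) : R :=
  fold_right (fun (b : bool) (acc : R) => (if b then g else 1 - g) * acc) 1 bs.

Close Scope R_scope.

Definition nHon (c : list miner) : nat := length (filter (fun m => miner_eqb m Hon) c).

(** * Blocks.  A block's identifier is its mining time (0 = the official
    block on which the cycle starts). *)

Record block := mkBlock {
  bid : nat;
  bminer : miner;
  bheight : nat;
  bparent : nat;
  bmined : nat;
  bpub : nat;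
  boff : bool       (* belongs to the official chain *)
}.

Definition base_block : block := mkBlock 0 Hon 0 0 0 0 true.

(* 1-based position in w of the k-th (1-based) occurrence of m. *)
Fixpoint occ_pos (m : miner) (w : list miner) (k : nat) : nat :=
  match w with
  | [] => O
  | x :: w' =>
      if miner_eqb x m then (if Nat.eqb k 1 then 1%nat else S (occ_pos m w' (k - 1)))
      else S (occ_pos m w' k)
  end.

(* Blocks produced by Strategy 1 during one cycle c, started at time t0 on the
   official block b0 of height h0, with honest parent bits bs.
   Returns the blocks and (id, height) of the last official block. *)
Definition cycle_blocks (t0 b0 h0 : nat) (c : list miner) (bs : list bool)
  : list block * (nat * nat) :=
  let cbit j := nth (j - 1) bs false in
  match c with
  | [Hon] =>
      ([mkBlock (t0+1) Hon (h0+1) b0 (t0+1) (t0+1) true], (t0+1, h0+1)%nat)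
  | [Att; Hon; Att] =>
      ([mkBlock (t0+1) Att (h0+1) b0 (t0+1) (t0+2) true;
        mkBlock (t0+2) Hon (h0+1) b0 (t0+2) (t0+2) false;
        mkBlock (t0+3) Att (h0+2) (t0+1) (t0+3) (t0+3) true], (t0+3, h0+2)%nat)
  | [Att; Hon; Hon] =>
      let g := cbit 2%nat in
      ([mkBlock (t0+1) Att (h0+1) b0 (t0+1) (t0+2) g;
        mkBlock (t0+2) Hon (h0+1) b0 (t0+2) (t0+2) (negb g);
        mkBlock (t0+3) Hon (h0+2) (if g then t0+1 else t0+2) (t0+3) (t0+3) true],
       (t0+3, h0+2)%nat)
  | _ =>
      (* S S w H : the attacker's fork wins *)
      let a := (length c - nHon c)%nat in
      let b := nHon c in
      let tS i := (t0 + occ_pos Att c i)%nat in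
      let tH j := (t0 + occ_pos Hon c j)%nat in
      (map (fun i => mkBlock (tS i) Att (h0+i)
                       (if Nat.eqb i 1 then b0 else tS (i-1)) (tS i)
                       (if Nat.leb i b then tH i else t0 + length c) true)
           (seq 1 a) ++
       map (fun j => mkBlock (tH j) Hon (h0+j)
                       (if Nat.eqb j 1 then b0
                        else if cbit j then tS (j-1) else tH (j-1))
                       (tH j) (tH j) false)
           (seq 1 b),
       (tS a, h0 + a)%nat)
  end.

Definition two_cycles (c1 : list miner) (bs1 : list bool) (c2 : list miner)
  (bs2 : list bool) : list block * list block :=
  let (B1, nb) := cycle_blocks 0 0 0 c1 bs1 in
  let (B2, _) := cycle_blocks (length c1) (fst nb) (snd nb) c2 bs2 in
  (B1, base_block :: B1 ++ B2).

Definition is_uncle (all : list block) (u : block) : bool :=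
  negb (boff u) && existsb (fun x => Nat.eqb (bid x) (bparent u) && boff x) all.

Definition knows (m : miner) (t : nat) (u : block) : bool :=
  Nat.ltb (bpub u) t ||
  (miner_eqb m Att && miner_eqb (bminer u) Att && Nat.ltb (bmined u) t).

Definition can_refer (n1 : nat) (u x : block) : bool :=
  boff x && Nat.ltb (bheight u) (bheight x) &&
  Nat.leb (bheight x - bheight u) n1 && knows (bminer x) (bmined x) u.

(* All miners refer all possible uncles: u is referred by the first (lowest)
   official block that can refer it; U_h counts those where it is honest. *)
Definition referred_by_honest (n1 : nat) (all : list block) (u : block) : bool :=
  existsb (fun x => can_refer n1 u x && miner_eqb (bminer x) Hon &&
             forallb (fun y => negb (can_refer n1 u y) || Nat.leb (bheight x) (bheight y)) all)
          all.

Definition Uh (n1 : nat) (c1 : list miner) (bs1 : list bool) (c2 : list miner)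
  (bs2 : list bool) : nat :=
  let (B1, all) := two_cycles c1 bs1 c2 bs2 in
  length (filter (fun u => is_uncle all u && referred_by_honest n1 all u) B1).

Fixpoint words (n : nat) : list (list miner) :=
  match n with O => [[]] | S n' => flat_map (fun w => [Att :: w; Hon :: w]) (words n') end.
Fixpoint bitlists (n : nat) : list (list bool) :=
  match n with O => [[]] | S n' => flat_map (fun w => [true :: w; false :: w]) (bitlists n') end.

Open Scope R_scope.

Definition sumR (l : list R) : R := fold_right Rplus 0 l.

(* N-th term: contribution of all (cycle, next cycle, bits) with total length N. *)
Definition Uh_term (p q g : R) (n1 : nat) (N : nat) : R :=
  sumR (map (fun k =>
    sumR (map (fun c1 =>
      sumR (map (fun c2 =>
        sumR (map (fun b1 =>
          sumR (map (fun b2 =>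
            cyc_prob p q c1 * bits_prob g b1 * cyc_prob p q c2 * bits_prob g b2
              * INR (Uh n1 c1 b1 c2 b2))
            (bitlists (nHon c2))))
          (bitlists (nHon c1))))
        (filter is_cycleb (words (N - k)))))
      (filter is_cycleb (words k))))
    (seq 0 (S N))).

(* Main.v *)
Require Import Defs.
From Stdlib Require Import Reals Lra Lia List Arith Bool.
Import ListNotations.
Open Scope R_scope.

Lemma sumR_app l1 l2 : sumR (l1 ++ l2) = sumR l1 + sumR l2.
Proof. induction l1; simpl; [lra| rewrite IHl1; lra]. Qed.

Lemma sumR_map_ext {A} (f g : A -> R) l :
  (forall x, In x l -> f x = g x) -> sumR (map f l) = sumR (map g l).
Proof. intros H; f_equal; apply map_ext_in; auto. Qed.

Lemma sumR_map_plus {A} (f g : A -> R) l :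
  sumR (map (fun x => f x + g x) l) = sumR (map f l) + sumR (map g l).
Proof. induction l; simpl; [lra| rewrite IHl; lra]. Qed.

Lemma sumR_map_scal {A} (a : R) (f : A -> R) l :
  sumR (map (fun x => a * f x) l) = a * sumR (map f l).
Proof. induction l; simpl; [lra| rewrite IHl; lra]. Qed.

Lemma sumR_map_zero {A} (f : A -> R) l :
  (forall x, In x l -> f x = 0) -> sumR (map f l) = 0.
Proof. induction l; simpl; intros H; [lra|]. rewrite H by auto. rewrite IHl by auto. lra. Qed.

Lemma sumR_flat_map {A B} (f : B -> R) (g : A -> list B) l :
  sumR (map f (flat_map g l)) = sumR (map (fun x => sumR (map f (g x))) l).
Proof. induction l; simpl; [lra|]. rewrite map_app, sumR_app, IHl. lra. Qed.

Lemma sumR_filter {A} (P : A -> bool) f l :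
  sumR (map f (filter P l)) = sumR (map (fun x => if P x then f x else 0) l).
Proof. induction l; simpl; [lra|]. destruct (P a); simpl; rewrite IHl; lra. Qed.

Lemma sumR_swap {A B} (f : A -> B -> R) l1 l2 :
  sumR (map (fun x => sumR (map (fun y => f x y) l2)) l1) =
  sumR (map (fun y => sumR (map (fun x => f x y) l1)) l2).
Proof.
  induction l1; simpl.
  - symmetry; apply sumR_map_zero; intros; simpl; lra.
  - rewrite IHl1. rewrite <- sumR_map_plus. reflexivity.
Qed.

Lemma words_S_sum (f : list miner -> R) n :
  sumR (map f (words (S n))) = sumR (map (fun w => f (Att :: w) + f (Hon :: w)) (words n)).
Proof. simpl. rewrite sumR_flat_map. apply sumR_map_ext. intros; simpl; lra. Qed.

Lemma words_len n w : In w (words n) -> length w = n.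
Proof.
  revert w; induction n; simpl; intros w H.
  - destruct H as [<-|[]]; reflexivity.
  - apply in_flat_map in H. destruct H as [w' [Hw' H]].
    simpl in H. destruct H as [<-|[<-|[]]]; simpl; f_equal; auto.
Qed.

Lemma words_S_snoc (f : list miner -> R) n :
  sumR (map f (words (S n))) = sumR (map (fun w => f (w ++ [Att]) + f (w ++ [Hon])) (words n)).
Proof.
  revert f; induction n; intros f.
  - simpl. lra.
  - rewrite words_S_sum. rewrite (IHn (fun w => f (Att::w) + f(Hon::w))).
    rewrite words_S_sum. apply sumR_map_ext; intros; simpl; lra.
Qed.

Definition swap (m : miner) := match m with Att => Hon | Hon => Att end.
Definition rs (w : list miner) := rev (map swap w).

Lemma words_rs_sum f n :
  sumR (map f (words n)) = sumR (map (fun w => f (rs w)) (words n)).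
Proof.
  revert f; induction n; intros f.
  - reflexivity.
  - rewrite (words_S_sum (fun w => f (rs w))).
    rewrite (words_S_snoc f). rewrite (IHn (fun w => f (w ++ [Att]) + f (w ++ [Hon]))).
    apply sumR_map_ext; intros; unfold rs; simpl; lra.
Qed.

Lemma words_single (P : list miner -> bool) (f : list miner -> R) c0 n :
  length c0 = n -> P c0 = true -> (forall w, length w = n -> P w = true -> w = c0) ->
  sumR (map (fun w => if P w then f w else 0) (words n)) = f c0.
Proof.
  revert P f c0; induction n; intros P f c0 Hl HP Hu.
  - destruct c0; [|discriminate]. simpl. rewrite HP. lra.
  - destruct c0 as [|x c0]; [discriminate|]. simpl in Hl. injection Hl as Hl.
    rewrite words_S_sum. rewrite sumR_map_plus.
    destruct x.
    + rewrite (IHn (fun w => P (Att :: w)) (fun w => f (Att :: w)) c0); auto.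
      * rewrite sumR_map_zero; [lra|]. intros w Hw.
        destruct (P (Hon :: w)) eqn:E; auto.
        apply Hu in E; [discriminate|]. simpl; f_equal; apply words_len; auto.
      * intros w Hw Hp. apply Hu in Hp; [injection Hp; auto| simpl; auto].
    + rewrite (IHn (fun w => P (Hon :: w)) (fun w => f (Hon :: w)) c0); auto.
      * rewrite sumR_map_zero; [lra|]. intros w Hw.
        destruct (P (Att :: w)) eqn:E; auto.
        apply Hu in E; [discriminate|]. simpl; f_equal; apply words_len; auto.
      * intros w Hw Hp. apply Hu in Hp; [injection Hp; auto| simpl; auto].
Qed.

Lemma words_none (P : list miner -> bool) (f : list miner -> R) n :
  (forall w, length w = n -> P w = false) ->
  sumR (map (fun w => if P w then f w else 0) (words n)) = 0.
Proof.
  intros H. apply sumR_map_zero. intros w Hw. rewrite H; auto. apply words_len; auto.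
Qed.

Fixpoint leadA (w : list miner) : nat := match w with Att :: w' => S (leadA w') | _ => O end.

Lemma words_prefix (f : list miner -> R) i m :
  sumR (map (fun w => if (i <=? leadA w)%nat then f w else 0) (words m)) =
  if (i <=? m)%nat then sumR (map (fun v => f (repeat Att i ++ v)) (words (m - i))) else 0.
Proof.
  revert f m; induction i; intros f m.
  - simpl. rewrite Nat.sub_0_r. reflexivity.
  - destruct m.
    + simpl. lra.
    + rewrite words_S_sum. rewrite sumR_map_plus.
      rewrite (sumR_map_zero (fun x => if (S i <=? leadA (Hon :: x))%nat then f (Hon :: x) else 0)).
      2:{ intros; simpl; reflexivity. }
      simpl leadA. simpl Nat.leb.
      rewrite (IHi (fun w => f (Att :: w)) m). simpl. lra.
Qed.

Definition step (k : nat) (x : miner) : option nat :=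
  match x with Att => Some (S k) | Hon => match k with O => None | S k' => Some k' end end.
Fixpoint run (k : nat) (w : list miner) : option nat :=
  match w with [] => Some k | x :: w' => match step k x with None => None | Some k' => run k' w' end end.

Lemma dyck_run k w : dyck_aux k w = match run k w with Some 0%nat => true | _ => false end.
Proof.
  revert k; induction w as [|x w IH]; intros k; simpl.
  - destruct k; reflexivity.
  - destruct x; simpl; [apply IH|]. destruct k; [reflexivity| apply IH].
Qed.

Lemma run_app k u v : run k (u ++ v) = match run k u with None => None | Some k' => run k' v end.
Proof. revert k; induction u; intros k; simpl; auto. destruct (step k a); auto. Qed.

Lemma step_swap k x k' : step k x = Some k' <-> step k' (swap x) = Some k.
Proof.
  destruct x; simpl; split; intros H.
  - injection H as <-. reflexivity.
  - destruct k'; [discriminate|]. injection H as ->. reflexivity.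
  - destruct k; [discriminate|]. injection H as ->. reflexivity.
  - injection H as <-. reflexivity.
Qed.

Lemma run_rs w : forall k e, run k w = Some e <-> run e (rs w) = Some k.
Proof.
  induction w as [|x w IH]; intros k e; unfold rs in *; simpl.
  - split; intros H; injection H; intros; subst; reflexivity.
  - rewrite run_app. split.
    + destruct (step k x) eqn:Es; [|discriminate]. intros Hr. apply IH in Hr.
      rewrite Hr. simpl. apply step_swap in Es. rewrite Es. reflexivity.
    + destruct (run e (rev (map swap w))) eqn:Er; [|discriminate]. simpl.
      destruct (step n (swap x)) eqn:Es; [|discriminate]. intros H; injection H as ->.
      apply step_swap in Es. rewrite Es. apply IH. exact Er.
Qed.

Lemma is_dyck_rs w : is_dyck (rs w) = is_dyck w.
Proof.
  unfold is_dyck; rewrite !dyck_run.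
  destruct (run 0 w) as [[|n]|] eqn:E.
  - apply run_rs in E. rewrite E. reflexivity.
  - destruct (run 0 (rs w)) as [[|m]|] eqn:E2; auto. apply run_rs in E2. congruence.
  - destruct (run 0 (rs w)) as [[|m]|] eqn:E2; auto. apply run_rs in E2. congruence.
Qed.

Lemma swap_swap x : swap (swap x) = x.
Proof. destruct x; reflexivity. Qed.

Lemma rs_rs w : rs (rs w) = w.
Proof.
  unfold rs. rewrite map_rev, rev_involutive, map_map.
  erewrite map_ext; [apply map_id|]. intros; apply swap_swap.
Qed.

Definition cnt (m : miner) (w : list miner) : nat := length (filter (fun x => miner_eqb x m) w).

Lemma run_cnt w : forall k e, run k w = Some e -> (k + cnt Att w = e + cnt Hon w)%nat.
Proof.
  induction w as [|x w IH]; intros k e H; simpl in *.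
  - injection H; intros; subst; unfold cnt; simpl; lia.
  - destruct x; simpl in H.
    + apply IH in H. unfold cnt in *; simpl. lia.
    + destruct k; [discriminate|]. apply IH in H. unfold cnt in *; simpl. lia.
Qed.

Lemma cyc_prob_cnt p q w : cyc_prob p q w = q ^ cnt Att w * p ^ cnt Hon w.
Proof.
  induction w as [|x w IH]; simpl; [unfold cnt; simpl; ring|].
  destruct x; unfold cnt in *; simpl; rewrite IH; ring.
Qed.

Lemma cyc_prob_app p q u v : cyc_prob p q (u ++ v) = cyc_prob p q u * cyc_prob p q v.
Proof. induction u; simpl; [ring|]. rewrite IHu; ring. Qed.

Lemma cyc_prob_rs p q w : cyc_prob p q (rs w) = cyc_prob q p w.
Proof.
  induction w as [|x w IH]; [reflexivity|].
  unfold rs in *; simpl. rewrite cyc_prob_app, IH. destruct x; simpl; ring.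
Qed.

Lemma dyck_cnt w : is_dyck w = true -> cnt Att w = cnt Hon w.
Proof.
  unfold is_dyck; rewrite dyck_run. destruct (run 0 w) as [[|n]|] eqn:E; try discriminate.
  intros _. apply run_cnt in E. lia.
Qed.

Lemma cyc_prob_rs_dyck p q w : is_dyck w = true -> cyc_prob p q (rs w) = cyc_prob p q w.
Proof.
  intros H. rewrite cyc_prob_rs, !cyc_prob_cnt, (dyck_cnt w H). ring.
Qed.

Fixpoint leadH (w : list miner) : nat := match w with Hon :: w' => S (leadH w') | _ => O end.
Definition trail (w : list miner) : nat := leadH (rev w).

Lemma leadH_swap w : leadH (map swap w) = leadA w.
Proof. induction w as [|x w IH]; [reflexivity|]. destruct x; simpl; auto. Qed.

Lemma trail_rs w : trail (rs w) = leadA w.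
Proof. unfold trail, rs. rewrite rev_involutive. apply leadH_swap. Qed.

Definition G (p q : R) (n k : nat) : R :=
  sumR (map (fun w => if dyck_aux k w then cyc_prob p q w else 0) (words n)).

Lemma G_0 p q k : G p q 0 k = if (k =? 0)%nat then 1 else 0.
Proof. unfold G; simpl. destruct k; simpl; lra. Qed.

Lemma G_S0 p q n : G p q (S n) 0 = q * G p q n 1.
Proof.
  unfold G. rewrite words_S_sum. rewrite <- sumR_map_scal. apply sumR_map_ext.
  intros w _. simpl. destruct (dyck_aux 1 w); lra.
Qed.

Lemma G_SS p q n k : G p q (S n) (S k) = q * G p q n (S (S k)) + p * G p q n k.
Proof.
  unfold G. rewrite words_S_sum. rewrite <- !sumR_map_scal, <- sumR_map_plus.
  apply sumR_map_ext. intros w _. simpl.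
  destruct (dyck_aux (S (S k)) w); destruct (dyck_aux k w); lra.
Qed.

Lemma cyc_prob_nonneg p q w : 0 <= p -> 0 <= q -> 0 <= cyc_prob p q w.
Proof.
  intros Hp Hq. induction w as [|x w IH]; simpl; [lra|].
  destruct x; apply Rmult_le_pos; auto.
Qed.

Lemma sumR_nonneg l : (forall x, In x l -> 0 <= x) -> 0 <= sumR l.
Proof. induction l; simpl; intros H; [lra|]. pose proof (H a (or_introl eq_refl)).
  pose proof (IHl (fun x Hx => H x (or_intror Hx))). lra. Qed.

Lemma G_nonneg p q n k : 0 <= p -> 0 <= q -> 0 <= G p q n k.
Proof.
  intros Hp Hq. unfold G. apply sumR_nonneg. intros x Hx. apply in_map_iff in Hx.
  destruct Hx as [w [<- _]]. destruct (dyck_aux k w); [apply cyc_prob_nonneg; auto| lra].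
Qed.

Lemma sum_f_R0_S f N : sum_f_R0 f (S N) = f 0%nat + sum_f_R0 (fun n => f (S n)) N.
Proof. induction N; simpl in *; [lra|]. rewrite IHN. lra. Qed.

Definition Ps p q N k := sum_f_R0 (fun n => G p q n k) N.

Lemma Ps_S0 p q N : Ps p q (S N) 0 = 1 + q * Ps p q N 1.
Proof.
  unfold Ps. rewrite sum_f_R0_S, G_0. simpl Nat.eqb. rewrite scal_sum.
  f_equal. apply sum_eq; intros; rewrite G_S0; lra.
Qed.

Lemma Ps_SS p q N k : Ps p q (S N) (S k) = q * Ps p q N (S (S k)) + p * Ps p q N k.
Proof.
  unfold Ps. rewrite sum_f_R0_S, G_0. simpl Nat.eqb. rewrite !scal_sum, <- sum_plus.
  rewrite Rplus_0_l. apply sum_eq; intros; rewrite G_SS; lra.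
Qed.

Lemma Ps_bound p q : 0 < q -> q < p -> p + q = 1 ->
  forall N k, 0 <= Ps p q N k <= 1 / p.
Proof.
  intros Hq Hpq Hs.
  assert (Hpi : p * (1/p) = 1) by (field; lra).
  assert (Hip : 1 / p = 1 + q * (1 / p)).
  { replace q with (1 - p) by lra. rewrite Rmult_minus_distr_r, Hpi. ring. }
  assert (H1 : 1 <= 1 / p).
  { rewrite Hip. assert (0 <= q * (1/p)). { apply Rmult_le_pos; [lra|]. apply Rlt_le, Rdiv_lt_0_compat; lra. } lra. }
  assert (Hpos : 0 < 1 / p) by lra.
  induction N; intros k.
  - unfold Ps; simpl. rewrite G_0. destruct (k =? 0)%nat; lra.
  - destruct k.
    + rewrite Ps_S0. destruct (IHN 1%nat) as [a b].
      assert (q * Ps p q N 1 <= q * (1/p)) by (apply Rmult_le_compat_l; lra).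
      split; [nra|lra].
    + rewrite Ps_SS. destruct (IHN (S (S k))) as [a b]. destruct (IHN k) as [c d].
      assert (q * Ps p q N (S (S k)) <= q * (1/p)) by (apply Rmult_le_compat_l; lra).
      assert (p * Ps p q N k <= p * (1/p)) by (apply Rmult_le_compat_l; lra).
      assert (p * (1/p) = 1) by (field; lra).
      split; [nra|lra].
Qed.

Lemma Un_cv_S u l : Un_cv u l -> Un_cv (fun n => u (S n)) l.
Proof.
  intros H eps He. destruct (H eps He) as [N HN]. exists N. intros n Hn. apply HN. lia.
Qed.

Lemma Un_cv_const c : Un_cv (fun _ => c) c.
Proof. intros eps He. exists 0%nat. intros. unfold Rdist. rewrite Rminus_diag, Rabs_R0. lra. Qed.

Lemma G_sum p q : 0 < q -> q < p -> p + q = 1 ->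
  forall k, infinite_sum (fun n => G p q n k) (1 / p).
Proof.
  intros Hq Hpq Hs.
  pose proof (Ps_bound p q Hq Hpq Hs) as Hb.
  assert (Hgr : forall k, Un_growing (fun N => Ps p q N k)).
  { intros k n. unfold Ps. simpl. pose proof (G_nonneg p q (S n) k). lra. }
  assert (Hub : forall k, has_ub (fun N => Ps p q N k)).
  { intros k. exists (1/p). intros x [i ->]. apply Hb. }
  pose (L := fun k => proj1_sig (growing_cv _ (Hgr k) (Hub k))).
  assert (HL : forall k, Un_cv (fun N => Ps p q N k) (L k)).
  { intros k. unfold L. destruct (growing_cv _ (Hgr k) (Hub k)); auto. }
  assert (HLb : forall k, 0 <= L k <= 1/p).
  { intros k. split.
    - apply (Rle_cv_lim (Un := fun _ => 0) (Vn := fun N => Ps p q N k)); auto.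
      + intros n; destruct (Hb n k); lra.
      + apply Un_cv_const.
    - apply (Rle_cv_lim (Un := fun N => Ps p q N k) (Vn := fun _ => 1/p)); auto.
      + intros n; destruct (Hb n k); lra.
      + apply Un_cv_const. }
  assert (E0 : L 0%nat = 1 + q * L 1%nat).
  { apply (UL_sequence (fun N => Ps p q (S N) 0)).
    - apply (Un_cv_S (fun N => Ps p q N 0)); auto.
    - assert (Un_cv (fun N => 1 + q * Ps p q N 1) (1 + q * L 1%nat)).
      { apply CV_plus; [apply Un_cv_const|]. apply CV_mult; [apply Un_cv_const| apply HL]. }
      intros eps He. destruct (H eps He) as [N HN]. exists N. intros n Hn.
      rewrite Ps_S0. apply HN; auto. }
  assert (ES : forall k, L (S k) = q * L (S (S k)) + p * L k).
  { intros k. apply (UL_sequence (fun N => Ps p q (S N) (S k))).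
    - apply (Un_cv_S (fun N => Ps p q N (S k))); auto.
    - assert (Un_cv (fun N => q * Ps p q N (S (S k)) + p * Ps p q N k) (q * L (S (S k)) + p * L k)).
      { apply CV_plus; apply CV_mult; try apply Un_cv_const; apply HL. }
      intros eps He. destruct (H eps He) as [N HN]. exists N. intros n Hn.
      rewrite Ps_SS. apply HN; auto. }
  assert (Hd : forall k, L 0%nat - L 1%nat = (q/p)^k * (L k - L (S k))).
  { induction k; [simpl; ring|].
    assert (Hk : p * (L k - L (S k)) = q * (L (S k) - L (S (S k)))).
    { assert (Hq' : q = 1 - p) by lra. rewrite (ES k). rewrite Hq'. ring. }
    rewrite IHk. simpl.
    replace (L k - L (S k)) with (q * (L (S k) - L (S (S k))) / p) by (rewrite <- Hk; field; lra).
    field. lra. }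
  assert (Hd0 : L 0%nat - L 1%nat = 0).
  { apply cond_eq. intros eps He. rewrite Rminus_0_r.
    assert (Hx : Rabs (q/p) < 1).
    { rewrite Rabs_right. apply (Rmult_lt_reg_r p); [lra|]. field_simplify; lra.
      apply Rle_ge. apply Rlt_le. apply Rdiv_lt_0_compat; lra. }
    destruct (pow_lt_1_zero (q/p) Hx (eps * p)) as [N HN].
    { apply Rmult_lt_0_compat; lra. }
    specialize (HN N (le_n N)). rewrite (Hd N).
    rewrite Rabs_mult.
    assert (Rabs (L N - L (S N)) <= 1/p).
    { destruct (HLb N); destruct (HLb (S N)). apply Rabs_le. lra. }
    assert (Rabs ((q/p)^N) * Rabs (L N - L (S N)) <= Rabs ((q/p)^N) * (1/p)).
    { apply Rmult_le_compat_l; auto. apply Rabs_pos. }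
    assert (Rabs ((q / p) ^ N) * (1 / p) < eps * p * (1/p)).
    { apply Rmult_lt_compat_r; auto. apply Rdiv_lt_0_compat; lra. }
    assert (eps * p * (1/p) = eps) by (field; lra).
    lra. }
  assert (Hall : forall k, L k = L 0%nat).
  { assert (forall k, L k - L (S k) = 0).
    { intros k. specialize (Hd k). rewrite Hd0 in Hd.
      assert ((q/p)^k <> 0) by (apply pow_nonzero; apply Rgt_not_eq; apply Rdiv_lt_0_compat; lra).
      apply (Rmult_eq_reg_l ((q/p)^k)); auto. lra. }
    induction k; auto. specialize (H k). lra. }
  assert (L 0%nat = 1/p).
  { rewrite (Hall 1%nat) in E0.
    assert (HpL : p * L 0%nat = 1) by nra.
    apply (Rmult_eq_reg_l p); [rewrite HpL; field; lra | lra]. }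
  intros k. unfold infinite_sum. rewrite <- H, <- (Hall k). apply HL.
Qed.

Close Scope R_scope.

Lemma miner_eqb_true x y : miner_eqb x y = true <-> x = y.
Proof. destruct x, y; simpl; split; intros; congruence. Qed.

Lemma cnt_cons m x w : cnt m (x :: w) = ((if miner_eqb x m then 1 else 0) + cnt m w)%nat.
Proof. unfold cnt; simpl. destruct (miner_eqb x m); reflexivity. Qed.

Lemma cnt_app m u v : cnt m (u ++ v) = (cnt m u + cnt m v)%nat.
Proof. unfold cnt. rewrite filter_app, length_app. reflexivity. Qed.

Lemma cnt_len w : length w = (cnt Att w + cnt Hon w)%nat.
Proof. induction w as [|x w IH]; [reflexivity|]. rewrite !cnt_cons. destruct x; simpl; lia. Qed.

Lemma nHon_cnt c : nHon c = cnt Hon c.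
Proof. reflexivity. Qed.

Lemma occ_bounds m w : forall k, (1 <= k <= cnt m w)%nat -> (1 <= occ_pos m w k <= length w)%nat.
Proof.
  induction w as [|x w IH]; intros k Hk; [unfold cnt in Hk; simpl in Hk; lia|].
  rewrite cnt_cons in Hk. simpl.
  destruct (miner_eqb x m).
  - destruct (Nat.eqb_spec k 1); [lia|]. specialize (IH (k-1)%nat). lia.
  - specialize (IH k). lia.
Qed.

Lemma occ_pos_pos m x w k : (1 <= occ_pos m (x :: w) k)%nat.
Proof. simpl. destruct (miner_eqb x m); [destruct (k =? 1)%nat|]; lia. Qed.

Lemma occ_app_l m u v : forall k, (1 <= k <= cnt m u)%nat -> occ_pos m (u ++ v) k = occ_pos m u k.
Proof.
  induction u as [|x u IH]; intros k Hk; [unfold cnt in Hk; simpl in Hk; lia|].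
  rewrite cnt_cons in Hk. simpl.
  destruct (miner_eqb x m).
  - destruct (Nat.eqb_spec k 1); [reflexivity|]. rewrite IH; [reflexivity|lia].
  - rewrite IH; [reflexivity|lia].
Qed.

Lemma occ_app_r m u v : forall k, (cnt m u < k)%nat ->
  occ_pos m (u ++ v) k = (length u + occ_pos m v (k - cnt m u))%nat.
Proof.
  induction u as [|x u IH]; intros k Hk.
  - simpl. rewrite Nat.sub_0_r. reflexivity.
  - rewrite cnt_cons in Hk. simpl. rewrite cnt_cons.
    destruct (miner_eqb x m).
    + destruct (Nat.eqb_spec k 1); [lia|]. rewrite IH; [|lia]. simpl. f_equal. f_equal. f_equal. lia.
    + rewrite IH; [|lia]. reflexivity.
Qed.

Lemma occ_repeat m t : forall i, (1 <= i <= t)%nat -> occ_pos m (repeat m t) i = i.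
Proof.
  induction t as [|t IH]; intros i Hi; [lia|]. simpl.
  assert (miner_eqb m m = true) by (destruct m; reflexivity). rewrite H.
  destruct (Nat.eqb_spec i 1); [lia|]. rewrite IH; lia.
Qed.

Lemma occ_nth m w : forall k, (1 <= k <= cnt m w)%nat -> nth (pred (occ_pos m w k)) w Att = m.
Proof.
  induction w as [|x w IH]; intros k Hk; [unfold cnt in Hk; simpl in Hk; lia|].
  rewrite cnt_cons in Hk. simpl.
  destruct (miner_eqb x m) eqn:E.
  - apply miner_eqb_true in E. destruct (Nat.eqb_spec k 1); [simpl; auto|].
    pose proof (IH (k-1)%nat ltac:(lia)) as Hn.
    pose proof (occ_bounds m w (k-1)%nat ltac:(lia)).
    destruct (occ_pos m w (k-1)) as [|o]; [lia|]. simpl in *. exact Hn.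
  - pose proof (IH k ltac:(lia)) as Hn. pose proof (occ_bounds m w k ltac:(lia)).
    destruct (occ_pos m w k) as [|o]; [lia|]. simpl in *. exact Hn.
Qed.

Lemma occ_distinct w i j : (1 <= i <= cnt Att w)%nat -> (1 <= j <= cnt Hon w)%nat ->
  occ_pos Att w i <> occ_pos Hon w j.
Proof.
  intros Hi Hj E. pose proof (occ_nth Att w i Hi). pose proof (occ_nth Hon w j Hj).
  rewrite E in H. congruence.
Qed.

Definition fA0 (c : list miner) (i : nat) : block :=
  mkBlock (occ_pos Att c i) Att i (if Nat.eqb i 1 then 0 else occ_pos Att c (i-1))
    (occ_pos Att c i) (if Nat.leb i (nHon c) then occ_pos Hon c i else length c) true.
Definition fH0 (c : list miner) (bs : list bool) (j : nat) : block :=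
  mkBlock (occ_pos Hon c j) Hon j
    (if Nat.eqb j 1 then 0 else if nth (j-1) bs false then occ_pos Att c (j-1) else occ_pos Hon c (j-1))
    (occ_pos Hon c j) (occ_pos Hon c j) false.

Lemma cb_default0 r bs :
  cycle_blocks 0 0 0 (Att :: Att :: r) bs =
  (map (fA0 (Att :: Att :: r)) (seq 1 (length (Att :: Att :: r) - nHon (Att :: Att :: r))) ++
   map (fH0 (Att :: Att :: r) bs) (seq 1 (nHon (Att :: Att :: r))),
   (occ_pos Att (Att :: Att :: r) (length (Att :: Att :: r) - nHon (Att :: Att :: r)),
    length (Att :: Att :: r) - nHon (Att :: Att :: r)))%nat.
Proof. reflexivity. Qed.

Open Scope R_scope.

Close Scope R_scope.

Lemma cycle_cases c : is_cycleb c = true ->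
  c = [Hon] \/ c = [Att;Hon;Att] \/ c = [Att;Hon;Hon] \/
  exists w, c = Att :: Att :: (w ++ [Hon]) /\ is_dyck w = true.
Proof.
  intros H. destruct c as [|x c]; [discriminate|]. destruct x.
  - destruct c as [|y c]; [discriminate|]. destruct y.
    + right; right; right. destruct c as [|z r]; [discriminate|].
      change (miner_eqb (last (z::r) Att) Hon && is_dyck (removelast (z::r)) = true) in H.
      apply andb_prop in H. destruct H as [H1 H2].
      exists (removelast (z :: r)). split; auto.
      f_equal. f_equal. apply miner_eqb_true in H1. rewrite <- H1.
      apply app_removelast_last. discriminate.
    + destruct c as [|z c]; [discriminate|]. destruct z; destruct c; try discriminate; auto.
  - destruct c; [auto|discriminate].
Qed.

Definition fA t0 b0 h0 (c : list miner) (i : nat) : block :=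
  mkBlock (t0 + occ_pos Att c i) Att (h0 + i) (if Nat.eqb i 1 then b0 else t0 + occ_pos Att c (i-1))
    (t0 + occ_pos Att c i) (if Nat.leb i (nHon c) then t0 + occ_pos Hon c i else t0 + length c) true.
Definition fH t0 b0 h0 (c : list miner) (bs : list bool) (j : nat) : block :=
  mkBlock (t0 + occ_pos Hon c j) Hon (h0 + j)
    (if Nat.eqb j 1 then b0 else if nth (j-1) bs false then t0 + occ_pos Att c (j-1) else t0 + occ_pos Hon c (j-1))
    (t0 + occ_pos Hon c j) (t0 + occ_pos Hon c j) false.

Lemma cb_default t0 b0 h0 r bs :
  fst (cycle_blocks t0 b0 h0 (Att :: Att :: r) bs) =
  map (fA t0 b0 h0 (Att :: Att :: r)) (seq 1 (length (Att :: Att :: r) - nHon (Att :: Att :: r))) ++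
   map (fH t0 b0 h0 (Att :: Att :: r) bs) (seq 1 (nHon (Att :: Att :: r))).
Proof. reflexivity. Qed.

Definition hc (c : list miner) (bs : list bool) : bool :=
  match c with [Hon] => true | [Att;Hon;Hon] => negb (nth 1 bs false) | _ => false end.

Lemma nHon_le w : (nHon w <= length w)%nat.
Proof. rewrite nHon_cnt, (cnt_len w). lia. Qed.

Lemma aSS r : (2 <= length (Att::Att::r) - nHon (Att::Att::r))%nat.
Proof. change (nHon (Att::Att::r)) with (nHon r). simpl length. pose proof (nHon_le r). lia. Qed.

Lemma B2_facts t0 b0 h0 c bs : is_cycleb c = true ->
  forall x, In x (fst (cycle_blocks t0 b0 h0 c bs)) ->
  (t0 < bmined x)%nat /\ bid x = bmined x /\ (h0 < bheight x)%nat.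
Proof.
  intros Hc x Hx. apply cycle_cases in Hc.
  destruct Hc as [->|[->|[->|[w [-> _]]]]].
  - simpl in Hx. destruct Hx as [<-|[]]; simpl; lia.
  - simpl in Hx. destruct Hx as [<-|[<-|[<-|[]]]]; simpl; lia.
  - simpl in Hx. destruct Hx as [<-|[<-|[<-|[]]]]; simpl; lia.
  - rewrite cb_default in Hx. apply in_app_iff in Hx.
    destruct Hx as [Hx|Hx]; apply in_map_iff in Hx; destruct Hx as [i [<- Hi]];
      apply in_seq in Hi; unfold fA, fH; cbn [bmined bid bheight];
      pose proof (occ_pos_pos Att Att (Att :: w ++ [Hon]) i);
      pose proof (occ_pos_pos Hon Att (Att :: w ++ [Hon]) i); lia.
Qed.

Lemma B2_first t0 b0 h0 c bs : is_cycleb c = true ->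
  exists z, In z (fst (cycle_blocks t0 b0 h0 c bs)) /\ boff z = true /\ bheight z = S h0 /\
   (forall x, In x (fst (cycle_blocks t0 b0 h0 c bs)) -> boff x = true -> bheight x = S h0 -> bminer x = bminer z) /\
   (bminer z = Hon <-> hc c bs = true).
Proof.
  intros Hc. apply cycle_cases in Hc.
  destruct Hc as [->|[->|[->|[w [-> _]]]]].
  - eexists; split; [simpl; left; reflexivity|]. simpl. repeat split; try lia; auto.
    intros x [<-|[]]; auto.
  - eexists; split; [simpl; left; reflexivity|]. simpl. repeat split; try lia; try discriminate.
    intros x [<-|[<-|[<-|[]]]]; simpl; try discriminate; try lia; auto.
  - simpl. destruct (nth 1 bs false) eqn:E; simpl.
    + eexists; split; [left; reflexivity|]. simpl. repeat split; try lia; try discriminate.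
      intros x [<-|[<-|[<-|[]]]]; simpl; try discriminate; try lia; auto.
    + eexists; split; [right; left; reflexivity|]. simpl. repeat split; try lia; try discriminate; auto.
      intros x [<-|[<-|[<-|[]]]]; simpl; try discriminate; try lia; auto.
  - exists (fA t0 b0 h0 (Att :: Att :: w ++ [Hon]) 1). rewrite cb_default.
    split; [|split; [reflexivity|split; [unfold fA; simpl; lia|split]]].
    + apply in_app_iff. left. apply in_map. apply in_seq.
      pose proof (aSS (w ++ [Hon])). lia.
    + intros x Hx Ho Hh. apply in_app_iff in Hx.
      destruct Hx as [Hx|Hx]; apply in_map_iff in Hx; destruct Hx as [i [<- Hi]]; [reflexivity|].
      unfold fH in Ho; simpl in Ho; discriminate.
    + simpl. split; intros H; discriminate.
Qed.

Open Scope R_scope.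

Close Scope R_scope.

Lemma in_all x B1 B2 : In x (base_block :: B1 ++ B2) -> x = base_block \/ In x B1 \/ In x B2.
Proof. simpl. intros [H|H]; auto. apply in_app_iff in H. tauto. Qed.

Lemma knows_hon m t u : bminer u = Hon -> knows m t u = (bpub u <? t)%nat.
Proof. intros H. unfold knows. rewrite H. destruct (miner_eqb m Att); simpl; rewrite ?orb_false_r; reflexivity. Qed.

Lemma can_refer_hon n1 u x : bminer u = Hon ->
  can_refer n1 u x = true <->
  (boff x = true /\ bheight u < bheight x /\ bheight x - bheight u <= n1 /\ bpub u < bmined x)%nat.
Proof.
  intros H. unfold can_refer. rewrite knows_hon by auto.
  rewrite !andb_true_iff, !Nat.ltb_lt, !Nat.leb_le. tauto.
Qed.

Lemma refh_intro n1 all u z : In z all -> can_refer n1 u z = true -> bminer z = Hon ->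
  (forall y, In y all -> can_refer n1 u y = true -> (bheight z <= bheight y)%nat) ->
  referred_by_honest n1 all u = true.
Proof.
  intros Hz Hc Hm Hmin. unfold referred_by_honest. apply existsb_exists. exists z. split; auto.
  rewrite Hc, Hm. simpl. apply forallb_forall. intros y Hy.
  destruct (can_refer n1 u y) eqn:E; simpl; auto. apply Nat.leb_le. auto.
Qed.

Lemma refh_elim n1 all u : referred_by_honest n1 all u = true ->
  exists x, In x all /\ can_refer n1 u x = true /\ bminer x = Hon /\
    (forall y, In y all -> can_refer n1 u y = true -> (bheight x <= bheight y)%nat).
Proof.
  unfold referred_by_honest. intros H. apply existsb_exists in H. destruct H as [x [Hx H]].
  apply andb_prop in H. destruct H as [H1 H3]. apply andb_prop in H1. destruct H1 as [H1 H2].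
  exists x. repeat split; auto. apply miner_eqb_true; auto.
  intros y Hy Hc. rewrite forallb_forall in H3. specialize (H3 y Hy). rewrite Hc in H3.
  simpl in H3. apply Nat.leb_le; auto.
Qed.

Lemma leadH_decomp v : exists rest, v = repeat Hon (leadH v) ++ rest /\ (rest = [] \/ exists r', rest = Att :: r').
Proof.
  induction v as [|x v IH]; [exists []; auto|]. destruct x.
  - exists (Att::v). simpl. split; auto. right; eauto.
  - destruct IH as [rest [E H]]. exists rest. simpl. split; auto. f_equal; exact E.
Qed.

Lemma cnt_repeat m m' t : cnt m (repeat m' t) = if miner_eqb m' m then t else 0%nat.
Proof.
  induction t; simpl; [destruct (miner_eqb m' m); reflexivity|].
  rewrite cnt_cons, IHt. destruct (miner_eqb m' m); lia.
Qed.

Lemma cnt_rev m w : cnt m (rev w) = cnt m w.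
Proof.
  induction w; simpl; auto. rewrite cnt_app, !cnt_cons, IHw. change (cnt m []) with 0%nat. lia.
Qed.

Lemma trail_decomp c : (1 <= cnt Att c)%nat -> exists u', c = u' ++ [Att] ++ repeat Hon (trail c).
Proof.
  intros H. unfold trail. destruct (leadH_decomp (rev c)) as [rest [E Hr]].
  set (n := leadH (rev c)) in *. clearbody n.
  destruct Hr as [->|[r' ->]].
  - rewrite app_nil_r in E. exfalso.
    assert (cnt Att (rev c) = 0)%nat by (rewrite E, cnt_repeat; reflexivity).
    rewrite cnt_rev in H0. lia.
  - exists (rev r'). rewrite <- (rev_involutive c). rewrite E. rewrite rev_app_distr. simpl.
    rewrite rev_repeat. rewrite <- app_assoc. reflexivity.
Qed.

Lemma trail_of u' t : trail (u' ++ [Att] ++ repeat Hon t) = t.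
Proof.
  unfold trail. rewrite !rev_app_distr, rev_repeat. simpl.
  induction t; simpl; auto.
Qed.

Lemma pos_facts u' t : (1 <= t)%nat ->
  let c := u' ++ [Att] ++ repeat Hon t in
  (forall i, 1 <= i <= cnt Att c -> occ_pos Att c i <= length u' + 1)%nat /\
  occ_pos Att c (cnt Att c) = (length u' + 1)%nat /\
  (forall j, 1 <= j <= cnt Hon u' -> occ_pos Hon c j <= length u')%nat /\
  (forall j, cnt Hon u' < j -> length u' + 2 <= occ_pos Hon c j)%nat /\
  cnt Att c = S (cnt Att u') /\ cnt Hon c = (cnt Hon u' + t)%nat.
Proof.
  intros Ht c.
  assert (Ca : cnt Att c = S (cnt Att u')).
  { unfold c. rewrite !cnt_app, cnt_repeat. change (cnt Att [Att]) with 1%nat. simpl. lia. }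
  assert (Ch : cnt Hon c = (cnt Hon u' + t)%nat).
  { unfold c. rewrite !cnt_app, cnt_repeat. change (cnt Hon [Att]) with 0%nat. simpl. lia. }
  split; [|split; [|split; [|split]]]; auto.
  - intros i Hi. rewrite Ca in Hi. unfold c.
    destruct (Nat.le_gt_cases i (cnt Att u')).
    + rewrite occ_app_l by lia. pose proof (occ_bounds Att u' i ltac:(lia)). lia.
    + rewrite occ_app_r by lia. replace (i - cnt Att u')%nat with 1%nat by lia. simpl. lia.
  - rewrite Ca. unfold c. rewrite occ_app_r by lia. replace (S (cnt Att u') - cnt Att u')%nat with 1%nat by lia.
    simpl. lia.
  - intros j Hj. unfold c. rewrite occ_app_l by lia. pose proof (occ_bounds Hon u' j ltac:(lia)). lia.
  - intros j Hj. unfold c. rewrite occ_app_r by lia. simpl.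
    destruct t as [|t]; [lia|]. simpl. destruct (j - cnt Hon u' =? 1)%nat; lia.
Qed.

Lemma len_filter {A} (P : A -> bool) l :
  length (filter P l) = list_sum (map (fun x => if P x then 1 else 0)%nat l).
Proof. induction l; simpl; auto. destruct (P a); simpl; lia. Qed.

Lemma list_sum_zero {A} (f : A -> nat) l : (forall x, In x l -> f x = 0%nat) -> list_sum (map f l) = 0%nat.
Proof. induction l; simpl; intros H; auto. rewrite H by auto. rewrite IHl; auto. Qed.

Lemma list_sum_ext {A} (f g : A -> nat) l : (forall x, In x l -> f x = g x) -> list_sum (map f l) = list_sum (map g l).
Proof. intros H. f_equal. apply map_ext_in. auto. Qed.

Open Scope R_scope.

Close Scope R_scope.

Lemma SS_core n1 c bs B2 u' t hcv :
  (1 <= t)%nat ->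
  c = u' ++ [Att] ++ repeat Hon t ->
  cnt Att c = S (cnt Hon c) ->
  (forall x, In x B2 -> length c < bmined x /\ bid x = bmined x /\ cnt Att c < bheight x)%nat ->
  (exists z, In z B2 /\ boff z = true /\ bheight z = S (cnt Att c) /\
     (forall x, In x B2 -> boff x = true -> bheight x = S (cnt Att c) -> bminer x = bminer z) /\
     (bminer z = Hon <-> hcv = true)) ->
  forall j, (1 <= j <= cnt Hon c)%nat ->
  let B1 := map (fA0 c) (seq 1 (cnt Att c)) ++ map (fH0 c bs) (seq 1 (cnt Hon c)) in
  let all := base_block :: B1 ++ B2 in
  is_uncle all (fH0 c bs j) = (j =? 1)%nat || nth (j-1) bs false /\
  referred_by_honest n1 all (fH0 c bs j) =
    ((cnt Hon u' <? j) && (cnt Hon c + 2 <=? j + n1))%nat && hcv.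
Proof.
  intros Ht Hc Hab HB2 [z [Hz [Hzo [Hzh [Hzu Hzm]]]]] j Hj B1 all.
  pose proof (pos_facts u' t Ht) as HP. cbv zeta in HP. rewrite <- Hc in HP.
  destruct HP as [Pa [Paa [Ph1 [Ph2 [Ca Ch]]]]].
  assert (Hlc : length c = (length u' + 1 + t)%nat).
  { rewrite Hc, !length_app, repeat_length. simpl. lia. }
  assert (Hin : forall x, In x all -> x = base_block \/
      (exists i, (1 <= i <= cnt Att c)%nat /\ x = fA0 c i) \/
      (exists j', (1 <= j' <= cnt Hon c)%nat /\ x = fH0 c bs j') \/ In x B2).
  { intros x Hx. apply in_all in Hx. destruct Hx as [Hx|[Hx|Hx]]; auto.
    unfold B1 in Hx. apply in_app_iff in Hx.
    destruct Hx as [Hx|Hx]; apply in_map_iff in Hx; destruct Hx as [i [<- Hi]]; apply in_seq in Hi.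
    - right; left. exists i; split; auto; lia.
    - right; right; left. exists i; split; auto; lia. }
  assert (HinA : forall i, (1 <= i <= cnt Att c)%nat -> In (fA0 c i) all).
  { intros i Hi. unfold all. right. apply in_app_iff. left. unfold B1. apply in_app_iff. left.
    apply in_map. apply in_seq. lia. }
  assert (HinB2 : forall x, In x B2 -> In x all).
  { intros x Hx. unfold all. right. apply in_app_iff. right. auto. }
  pose proof (occ_bounds Hon c j Hj) as Hbj.
  split.
  -
    unfold is_uncle. change (boff (fH0 c bs j)) with false. cbn [negb andb].
    change (bparent (fH0 c bs j)) with
      (if Nat.eqb j 1 then 0%nat else if nth (j-1) bs false then occ_pos Att c (j-1) else occ_pos Hon c (j-1)).
    destruct (Nat.eqb_spec j 1) as [Ej|Ej].
    + reflexivity.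
    + simpl orb. destruct (nth (j-1) bs false) eqn:En.
      * apply existsb_exists. exists (fA0 c (j-1)). split; [apply HinA; lia|].
        unfold fA0. cbn [bid boff]. rewrite Nat.eqb_refl. reflexivity.
      * destruct (existsb _ all) eqn:E; [|reflexivity]. exfalso.
        apply existsb_exists in E. destruct E as [x [Hx Hf]]. apply andb_prop in Hf.
        destruct Hf as [Hid Hoff]. apply Nat.eqb_eq in Hid.
        pose proof (occ_bounds Hon c (j-1) ltac:(lia)).
        apply Hin in Hx. destruct Hx as [->|[[i [Hi ->]]|[[j' [Hj' ->]]|Hx]]].
        -- simpl in Hid. lia.
        -- unfold fA0 in Hid. cbn [bid] in Hid. apply (occ_distinct c i (j-1)); auto; lia.
        -- unfold fH0 in Hoff. cbn [boff] in Hoff. discriminate.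
        -- destruct (HB2 x Hx) as [H1 [H2 H3]]. lia.
  -
    assert (Hcr : forall x, can_refer n1 (fH0 c bs j) x = true <->
              (boff x = true /\ j < bheight x /\ bheight x - j <= n1 /\ occ_pos Hon c j < bmined x)%nat).
    { intros x. rewrite can_refer_hon by reflexivity; try reflexivity. }
    assert (Hbase : can_refer n1 (fH0 c bs j) base_block = false).
    { reflexivity. }
    assert (HH : forall j', can_refer n1 (fH0 c bs j) (fH0 c bs j') = false).
    { intros j'. reflexivity. }
    destruct (Nat.le_gt_cases j (cnt Hon u')) as [HjK|HjK].
    + assert (Hf : (cnt Hon u' <? j)%nat = false) by (apply Nat.ltb_ge; lia).
      rewrite Hf. simpl.
      destruct (referred_by_honest _ _ _) eqn:E; [|reflexivity]. exfalso.
      apply refh_elim in E. destruct E as [x [Hx [Hrx [Hmx Hminx]]]].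
      pose proof (Ph1 j ltac:(lia)).
      apply Hin in Hx. destruct Hx as [->|[[i [Hi ->]]|[[j' [Hj' ->]]|Hx]]].
      * congruence.
      * unfold fA0 in Hmx. simpl in Hmx. discriminate.
      * rewrite HH in Hrx. discriminate.
      * destruct (HB2 x Hx) as [H1 [H2 H3]]. apply Hcr in Hrx. destruct Hrx as [R1 [R2 [R3 R4]]].
        assert (Hy : can_refer n1 (fH0 c bs j) (fA0 c (cnt Att c)) = true).
        { apply Hcr. unfold fA0. cbn [boff bheight bmined]. rewrite Paa. repeat split; lia. }
        specialize (Hminx _ (HinA (cnt Att c) ltac:(lia)) Hy). unfold fA0 in Hminx. simpl in Hminx. lia.
    + assert (Hf : (cnt Hon u' <? j)%nat = true) by (apply Nat.ltb_lt; lia).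
      rewrite Hf. simpl andb.
      pose proof (Ph2 j HjK) as Htj.
      assert (HA : forall i, (1 <= i <= cnt Att c)%nat -> can_refer n1 (fH0 c bs j) (fA0 c i) = false).
      { intros i Hi. apply not_true_is_false. intros E. apply Hcr in E. unfold fA0 in E.
        cbn [bmined] in E. pose proof (Pa i Hi). lia. }
      destruct (Nat.leb_spec (cnt Hon c + 2) (j + n1)) as [Hd|Hd].
      * assert (Hrz : can_refer n1 (fH0 c bs j) z = true).
        { apply Hcr. destruct (HB2 z Hz) as [H1 [H2 H3]]. repeat split; auto; lia. }
        destruct hcv.
        -- apply (refh_intro _ _ _ z); auto. apply Hzm; auto.
           intros y Hy Hry. apply Hin in Hy. destruct Hy as [->|[[i [Hi ->]]|[[j' [Hj' ->]]|Hy]]].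
           ++ congruence.
           ++ rewrite HA in Hry by auto. discriminate.
           ++ rewrite HH in Hry. discriminate.
           ++ destruct (HB2 y Hy) as [H1 [H2 H3]]. lia.
        -- destruct (referred_by_honest _ _ _) eqn:E; [|reflexivity]. exfalso.
           apply refh_elim in E. destruct E as [x [Hx [Hrx [Hmx Hminx]]]].
           assert (Hx' := Hx). apply Hin in Hx'.
           destruct Hx' as [->|[[i [Hi ->]]|[[j' [Hj' ->]]|Hx2]]].
           ++ congruence.
           ++ rewrite HA in Hrx by auto. discriminate.
           ++ rewrite HH in Hrx. discriminate.
           ++ specialize (Hminx z (HinB2 z Hz) Hrz). destruct (HB2 x Hx2) as [H1 [H2 H3]].
              apply Hcr in Hrx. destruct Hrx as [R1 _].
              assert (bminer x = bminer z) by (apply Hzu; auto; lia).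
              assert (false = true) by (apply Hzm; congruence). discriminate.
      * rewrite andb_false_l.
        destruct (referred_by_honest _ _ _) eqn:E; [|reflexivity]. exfalso.
        apply refh_elim in E. destruct E as [x [Hx [Hrx [Hmx Hminx]]]].
        apply Hin in Hx. destruct Hx as [->|[[i [Hi ->]]|[[j' [Hj' ->]]|Hx]]].
        -- congruence.
        -- rewrite HA in Hrx by auto. discriminate.
        -- rewrite HH in Hrx. discriminate.
        -- destruct (HB2 x Hx) as [H1 [H2 H3]]. apply Hcr in Hrx. lia.
Qed.

Open Scope R_scope.

Close Scope R_scope.

Definition Ic (c : list miner) : nat := match c with [Att;Hon;Hon] => 1%nat | _ => 0%nat end.
Definition Fc (n1 : nat) (c : list miner) (bs : list bool) : nat :=
  match c with
  | Att :: Att :: _ =>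
     list_sum (map (fun j => if ((nHon c - trail c <? j) && (nHon c + 2 <=? j + n1))%nat
                              then (if (j =? 1)%nat || nth (j-1) bs false then 1%nat else 0%nat) else 0%nat)
                  (seq 1 (nHon c)))
  | _ => 0%nat end.

Lemma Uh_unfold n1 c1 bs1 c2 bs2 :
  Uh n1 c1 bs1 c2 bs2 =
  let B1 := fst (cycle_blocks 0 0 0 c1 bs1) in
  let nb := snd (cycle_blocks 0 0 0 c1 bs1) in
  let all := base_block :: B1 ++ fst (cycle_blocks (length c1) (fst nb) (snd nb) c2 bs2) in
  length (filter (fun u => is_uncle all u && referred_by_honest n1 all u) B1).
Proof.
  unfold Uh, two_cycles. destruct (cycle_blocks 0 0 0 c1 bs1) as [B1 nb]. simpl.
  destruct (cycle_blocks (length c1) (fst nb) (snd nb) c2 bs2) as [B2 x]. reflexivity.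
Qed.

Lemma trail_snocH v : trail (v ++ [Hon]) = S (trail v).
Proof. unfold trail. rewrite rev_app_distr. reflexivity. Qed.

Lemma Fc_SS n1 r bs : Fc n1 (Att :: Att :: r) bs =
     list_sum (map (fun j => if ((nHon (Att :: Att :: r) - trail (Att :: Att :: r) <? j) && (nHon (Att :: Att :: r) + 2 <=? j + n1))%nat
                              then (if (j =? 1)%nat || nth (j-1) bs false then 1%nat else 0%nat) else 0%nat)
                  (seq 1 (nHon (Att :: Att :: r)))).
Proof. reflexivity. Qed.

Lemma Uh_decomp n1 c1 bs1 c2 bs2 : (1 <= n1)%nat -> is_cycleb c1 = true -> is_cycleb c2 = true ->
  Uh n1 c1 bs1 c2 bs2 = (Ic c1 + (if hc c2 bs2 then Fc n1 c1 bs1 else 0))%nat.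
Proof.
  intros Hn1 Hc1 Hc2. rewrite Uh_unfold. cbv zeta.
  pose proof (B2_facts (length c1) (fst (snd (cycle_blocks 0 0 0 c1 bs1)))
                 (snd (snd (cycle_blocks 0 0 0 c1 bs1))) c2 bs2 Hc2) as HB2.
  pose proof (B2_first (length c1) (fst (snd (cycle_blocks 0 0 0 c1 bs1)))
                 (snd (snd (cycle_blocks 0 0 0 c1 bs1))) c2 bs2 Hc2) as HB2f.
  set (B2 := fst (cycle_blocks (length c1) (fst (snd (cycle_blocks 0 0 0 c1 bs1)))
                 (snd (snd (cycle_blocks 0 0 0 c1 bs1))) c2 bs2)) in *.
  clearbody B2.
  apply cycle_cases in Hc1. destruct Hc1 as [->|[->|[->|[w [-> Hw]]]]].
  - simpl. destruct (hc c2 bs2); reflexivity.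
  - simpl in HB2. simpl.
    set (u := {| bid := 2; bminer := Hon; bheight := 1; bparent := 0; bmined := 2; bpub := 2; boff := false |}).
    set (all := base_block :: {| bid := 1; bminer := Att; bheight := 1; bparent := 0; bmined := 1; bpub := 2; boff := true |} :: u :: {| bid := 3; bminer := Att; bheight := 2; bparent := 1; bmined := 3; bpub := 3; boff := true |} :: B2).
    assert (E : referred_by_honest n1 all u = false).
    { destruct (referred_by_honest n1 all u) eqn:E; auto. exfalso.
      apply refh_elim in E. destruct E as [x [Hx [Hrx [Hmx Hminx]]]].
      rewrite can_refer_hon in Hrx by reflexivity. simpl in Hrx.
      assert (Hy : can_refer n1 u {| bid := 3; bminer := Att; bheight := 2; bparent := 1; bmined := 3; bpub := 3; boff := true |} = true).
      { apply can_refer_hon; [reflexivity|]. simpl. lia. }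
      specialize (Hminx _ (or_intror (or_intror (or_intror (or_introl eq_refl)))) Hy). simpl in Hminx.
      destruct Hx as [<-|[<-|[<-|[<-|Hx]]]]; simpl in *; try discriminate; try lia.
      destruct (HB2 x Hx) as [_ [_ H3]]. lia. }
    rewrite E. simpl. destruct (hc c2 bs2); reflexivity.
  - simpl in HB2. simpl. destruct (nth 1 bs1 false) eqn:Eg; simpl.
    + set (u := {| bid := 2; bminer := Hon; bheight := 1; bparent := 0; bmined := 2; bpub := 2; boff := false |}).
      set (all := base_block :: {| bid := 1; bminer := Att; bheight := 1; bparent := 0; bmined := 1; bpub := 2; boff := true |} :: u :: {| bid := 3; bminer := Hon; bheight := 2; bparent := 1; bmined := 3; bpub := 3; boff := true |} :: B2).
      assert (E : referred_by_honest n1 all u = true).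
      { apply (refh_intro _ _ _ {| bid := 3; bminer := Hon; bheight := 2; bparent := 1; bmined := 3; bpub := 3; boff := true |}).
        - simpl; auto.
        - apply can_refer_hon; [reflexivity|]. simpl. lia.
        - reflexivity.
        - intros y _ Hy. apply can_refer_hon in Hy; [|reflexivity]. simpl in *. lia. }
      rewrite E. simpl. destruct (hc c2 bs2); reflexivity.
    + set (u := {| bid := 1; bminer := Att; bheight := 1; bparent := 0; bmined := 1; bpub := 2; boff := false |}).
      set (all := base_block :: u :: {| bid := 2; bminer := Hon; bheight := 1; bparent := 0; bmined := 2; bpub := 2; boff := true |} :: {| bid := 3; bminer := Hon; bheight := 2; bparent := 2; bmined := 3; bpub := 3; boff := true |} :: B2).
      assert (E : referred_by_honest n1 all u = true).
      { apply (refh_intro _ _ _ {| bid := 3; bminer := Hon; bheight := 2; bparent := 2; bmined := 3; bpub := 3; boff := true |}).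
        - simpl; auto.
        - unfold can_refer, knows. simpl. destruct n1; [lia|reflexivity].
        - reflexivity.
        - intros y _ Hy. unfold can_refer in Hy. apply andb_prop in Hy. destruct Hy as [Hy _].
          apply andb_prop in Hy. destruct Hy as [Hy _]. apply andb_prop in Hy. destruct Hy as [_ Hy].
          apply Nat.ltb_lt in Hy. simpl in *. lia. }
      rewrite E. simpl. destruct (hc c2 bs2); reflexivity.
  - rewrite (cb_default0 (w ++ [Hon]) bs1) in *. cbn [fst snd] in *.
    rewrite (Fc_SS n1 (w ++ [Hon]) bs1).
    set (c := Att :: Att :: w ++ [Hon]) in *.
    change (nHon c) with (cnt Hon c) in *.
    assert (Ha : (length c - cnt Hon c)%nat = cnt Att c) by (rewrite (cnt_len c); lia).
    rewrite Ha in *.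
    assert (Hab : cnt Att c = S (cnt Hon c)).
    { unfold c. rewrite !cnt_cons, !cnt_app. simpl. pose proof (dyck_cnt w Hw).
      change (cnt Att [Hon]) with 0%nat. change (cnt Hon [Hon]) with 1%nat. lia. }
    assert (Ht : (1 <= trail c)%nat).
    { unfold c. change (Att :: Att :: w ++ [Hon]) with ((Att :: Att :: w) ++ [Hon]).
      rewrite trail_snocH. lia. }
    assert (HIc : Ic c = 0%nat) by (unfold c; reflexivity). rewrite HIc.
    clearbody c.
    destruct (trail_decomp c ltac:(lia)) as [u' Hu].
    pose proof (pos_facts u' (trail c) Ht) as HP. cbv zeta in HP. rewrite <- Hu in HP.
    destruct HP as [_ [_ [_ [_ [_ Ch]]]]].
    rewrite filter_app, length_app, !len_filter, !map_map.
    rewrite list_sum_zero by (intros; reflexivity).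
    rewrite Nat.add_0_l.
    transitivity (list_sum (map (fun j => if hc c2 bs2 then
       (if ((cnt Hon c - trail c <? j) && (cnt Hon c + 2 <=? j + n1))%nat
        then (if (j =? 1)%nat || nth (j-1) bs1 false then 1%nat else 0%nat) else 0%nat) else 0%nat)
       (seq 1 (cnt Hon c)))).
    + apply list_sum_ext. intros j Hj. apply in_seq in Hj.
      destruct (SS_core n1 c bs1 B2 u' (trail c) (hc c2 bs2) Ht Hu Hab HB2 HB2f j ltac:(lia)) as [U R].
      cbv zeta in U, R. rewrite U, R.
      replace (cnt Hon c - trail c)%nat with (cnt Hon u') by lia.
      destruct (hc c2 bs2), (_ =? 1)%nat, (nth (j-1) bs1 false), (cnt Hon u' <? j)%nat, (cnt Hon c + 2 <=? j + n1)%nat;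
        reflexivity.
    + destruct (hc c2 bs2); [reflexivity|]. apply list_sum_zero. intros; reflexivity.
Qed.

Open Scope R_scope.

Lemma IS_ext s t l : (forall n, s n = t n) -> infinite_sum s l -> infinite_sum t l.
Proof.
  intros H Hs eps He. destruct (Hs eps He) as [N HN]. exists N. intros n Hn.
  rewrite <- (sum_eq s t n) by auto. apply HN; auto.
Qed.

Lemma IS_plus s t l1 l2 : infinite_sum s l1 -> infinite_sum t l2 ->
  infinite_sum (fun n => s n + t n) (l1 + l2).
Proof.
  intros H1 H2. unfold infinite_sum.
  assert (Un_cv (fun n => sum_f_R0 s n + sum_f_R0 t n) (l1 + l2)) by (apply CV_plus; auto).
  intros eps He. destruct (H eps He) as [N HN]. exists N. intros n Hn. rewrite sum_plus. apply HN; auto.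
Qed.

Lemma IS_scal a s l : infinite_sum s l -> infinite_sum (fun n => a * s n) (a * l).
Proof.
  intros H1. unfold infinite_sum.
  assert (Un_cv (fun n => a * sum_f_R0 s n) (a * l)) by (apply CV_mult; [apply Un_cv_const|auto]).
  intros eps He. destruct (H eps He) as [N HN]. exists N. intros n Hn.
  replace (sum_f_R0 (fun n0 => a * s n0) n) with (a * sum_f_R0 s n).
  - apply HN; auto.
  - rewrite scal_sum. apply sum_eq. intros; ring.
Qed.

Lemma IS_zero : infinite_sum (fun _ => 0) 0.
Proof.
  intros eps He. exists 0%nat. intros n _.
  assert (sum_f_R0 (fun _ => 0) n = 0). { induction n; simpl; auto. rewrite IHn. ring. }
  rewrite H. unfold Rdist. rewrite Rminus_diag, Rabs_R0. lra.
Qed.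

Lemma sum_shift s j N : sum_f_R0 (fun n => if (j <=? n)%nat then s (n - j)%nat else 0) N =
  if (j <=? N)%nat then sum_f_R0 s (N - j) else 0.
Proof.
  induction N.
  - simpl. destruct j; simpl; auto.
  - rewrite tech5, IHN. cbv beta.
    destruct (Nat.leb_spec j N); destruct (Nat.leb_spec j (S N)); try lia.
    + rewrite (Nat.sub_succ_l j N) by lia. reflexivity.
    + replace j with (S N) by lia. rewrite Nat.sub_diag. simpl. ring.
    + ring.
Qed.

Lemma IS_shift s l j : infinite_sum s l -> infinite_sum (fun n => if (j <=? n)%nat then s (n - j)%nat else 0) l.
Proof.
  intros H eps He. destruct (H eps He) as [N HN]. exists (N + j)%nat. intros n Hn.
  rewrite sum_shift. destruct (Nat.leb_spec j n); [|lia]. apply HN. lia.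
Qed.

Lemma IS_spike j c : infinite_sum (fun n => if (n =? j)%nat then c else 0) c.
Proof.
  assert (H : infinite_sum (fun n => if (n =? 0)%nat then c else 0) c).
  { intros eps He. exists 0%nat. intros n _.
    assert (sum_f_R0 (fun n => if (n =? 0)%nat then c else 0) n = c).
    { induction n; simpl; auto. rewrite IHn. ring. }
    rewrite H. unfold Rdist. rewrite Rminus_diag, Rabs_R0. lra. }
  apply (IS_shift _ _ j) in H. eapply IS_ext; [|exact H].
  intros n. simpl. destruct (Nat.leb_spec j n); destruct (Nat.eqb_spec n j); try lia.
  - subst. rewrite Nat.sub_diag. reflexivity.
  - destruct (Nat.eqb_spec (n - j) 0); [lia|reflexivity].
  - reflexivity.
Qed.

Lemma IS_finsum (s : nat -> nat -> R) (l : nat -> R) (L : list nat) :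
  (forall i, In i L -> infinite_sum (s i) (l i)) ->
  infinite_sum (fun n => sumR (map (fun i => s i n) L)) (sumR (map l L)).
Proof.
  induction L as [|i L IH]; intros H; simpl.
  - apply IS_zero.
  - apply IS_plus; [apply H; left; auto | apply IH; intros; apply H; right; auto].
Qed.

Lemma geom_sum x K : x <> 1 -> sumR (map (fun i => x ^ i) (seq 0 K)) = (1 - x ^ K) / (1 - x).
Proof.
  intros Hx. induction K.
  - simpl. field. lra.
  - rewrite seq_S, map_app, sumR_app, IHK. simpl. field. lra.
Qed.

Lemma bits_const g n c : sumR (map (fun bs => bits_prob g bs * c) (bitlists n)) = c.
Proof.
  induction n; simpl; [lra|]. rewrite sumR_flat_map.
  transitivity (sumR (map (fun bs => bits_prob g bs * c) (bitlists n))); [|exact IHn].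
  apply sumR_map_ext. intros w _. simpl. ring.
Qed.

Lemma bits_sum1 g n : sumR (map (bits_prob g) (bitlists n)) = 1.
Proof.
  rewrite <- (bits_const g n 1). apply sumR_map_ext. intros; ring.
Qed.

Lemma bits_nth g n : forall i, (i < n)%nat ->
  sumR (map (fun bs => bits_prob g bs * (if nth i bs false then 1 else 0)) (bitlists n)) = g.
Proof.
  induction n; intros i Hi; [lia|]. simpl. rewrite sumR_flat_map.
  destruct i.
  - transitivity (sumR (map (fun bs => bits_prob g bs * g) (bitlists n))); [|apply bits_const].
    apply sumR_map_ext. intros w _. simpl. ring.
  - transitivity (sumR (map (fun bs => bits_prob g bs * (if nth i bs false then 1 else 0)) (bitlists n)));
      [|apply IHn; lia].
    apply sumR_map_ext. intros w _. simpl. ring.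
Qed.

Lemma INR_list_sum {A} (f : A -> nat) l : INR (list_sum (map f l)) = sumR (map (fun x => INR (f x)) l).
Proof. induction l; simpl; auto. rewrite plus_INR, IHl. reflexivity. Qed.

Lemma count_gt L b : list_sum (map (fun j => if (L <? j)%nat then 1%nat else 0%nat) (seq 1 b)) = (b - L)%nat.
Proof.
  induction b; [reflexivity|]. rewrite seq_S, map_app, list_sum_app, IHb. cbn [map list_sum].
  destruct (Nat.ltb_spec L (1 + b)); cbn [list_sum fold_right]; lia.
Qed.

Lemma count_le T K : list_sum (map (fun i => if (i <=? T)%nat then 1%nat else 0%nat) (seq 0 K)) = Nat.min (S T) K.
Proof.
  induction K; [reflexivity|]. rewrite seq_S, map_app, list_sum_app, IHK. cbn [map list_sum].
  destruct (Nat.leb_spec (0 + K) T); cbn [list_sum fold_right]; lia.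
Qed.

Lemma count_cond b t n1 : (t <= b)%nat ->
  list_sum (map (fun j => if ((b - t <? j) && (b + 2 <=? j + n1))%nat then 1%nat else 0%nat) (seq 1 b))
  = Nat.min t (n1 - 1).
Proof.
  intros Ht.
  rewrite (list_sum_ext _ (fun j => if (Nat.max (b - t) (b + 1 - n1) <? j)%nat then 1%nat else 0%nat)).
  - rewrite count_gt. lia.
  - intros j Hj. apply in_seq in Hj.
    destruct (Nat.ltb_spec (b - t) j); destruct (Nat.leb_spec (b + 2) (j + n1));
      destruct (Nat.ltb_spec (Nat.max (b - t) (b + 1 - n1)) j); simpl; lia.
Qed.

Lemma sum_cond b (C : nat -> bool) g : (1 <= b)%nat ->
  sumR (map (fun j => if C j then (if (j =? 1)%nat then 1 else g) else 0) (seq 1 b)) =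
  g * INR (list_sum (map (fun j => if C j then 1%nat else 0%nat) (seq 1 b))) + (1 - g) * (if C 1%nat then 1 else 0).
Proof.
  intros Hb. destruct b; [lia|]. rewrite <- cons_seq. simpl map. simpl sumR. simpl list_sum.
  rewrite plus_INR, INR_list_sum.
  rewrite (sumR_map_ext _ (fun j => g * INR (if C j then 1%nat else 0%nat))).
  - rewrite sumR_map_scal. destruct (C 1%nat); simpl; ring.
  - intros j Hj. apply in_seq in Hj. destruct (Nat.eqb_spec j 1); [lia|]. destruct (C j); simpl; ring.
Qed.

Definition EF g n1 c := sumR (map (fun bs => bits_prob g bs * INR (Fc n1 c bs)) (bitlists (nHon c))).
Definition Eh g c := sumR (map (fun bs => bits_prob g bs * (if hc c bs then 1 else 0)) (bitlists (nHon c))).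

Lemma leadH_appA v z : leadH (v ++ Att :: z) = leadH v.
Proof. induction v as [|x v IH]; [reflexivity|]. destruct x; simpl; auto. Qed.

Lemma trail_SS w : trail (Att :: Att :: w ++ [Hon]) = S (trail w).
Proof.
  change (Att :: Att :: w ++ [Hon]) with ((Att :: Att :: w) ++ [Hon]). rewrite trail_snocH.
  f_equal. unfold trail. simpl. rewrite <- app_assoc. simpl. apply leadH_appA.
Qed.

Lemma nHon_SS w : nHon (Att :: Att :: w ++ [Hon]) = S (nHon w).
Proof. change (cnt Hon (Att :: Att :: w ++ [Hon]) = S (cnt Hon w)). rewrite !cnt_cons, cnt_app.
  change (cnt Hon [Hon]) with 1%nat. simpl. lia. Qed.

Lemma leadH_le v : (leadH v <= cnt Hon v)%nat.
Proof. induction v as [|x v IH]; [simpl; lia|]. rewrite cnt_cons. destruct x; simpl; lia. Qed.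

Lemma trail_le w : (trail w <= nHon w)%nat.
Proof. unfold trail. pose proof (leadH_le (rev w)). rewrite cnt_rev in H. exact H. Qed.

Lemma EF_SS g n1 w :
  EF g n1 (Att :: Att :: w ++ [Hon]) =
  g * INR (list_sum (map (fun i => if (i <=? trail w)%nat then 1%nat else 0%nat) (seq 0 (n1 - 1))))
  + (1 - g) * (if ((nHon w <=? trail w) && (nHon w + 2 <=? n1))%nat then 1 else 0).
Proof.
  unfold EF.
  set (c := Att :: Att :: w ++ [Hon]).
  assert (HF : forall bs, Fc n1 c bs = list_sum (map (fun j => if ((nHon c - trail c <? j) && (nHon c + 2 <=? j + n1))%nat
                              then (if (j =? 1)%nat || nth (j-1) bs false then 1%nat else 0%nat) else 0%nat)
                  (seq 1 (nHon c)))) by (intros; reflexivity).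
  assert (Hb : nHon c = S (nHon w)) by apply nHon_SS.
  assert (Ht : trail c = S (trail w)) by apply trail_SS.
  pose proof (trail_le w) as Htl.
  rewrite (sumR_map_ext _ (fun bs => sumR (map (fun j => bits_prob g bs *
      INR (if ((nHon c - trail c <? j) && (nHon c + 2 <=? j + n1))%nat
           then if (j =? 1)%nat || nth (j - 1) bs false then 1%nat else 0%nat else 0%nat)) (seq 1 (nHon c))))).
  2:{ intros bs _. rewrite HF, INR_list_sum, sumR_map_scal. reflexivity. }
  rewrite sumR_swap.
  rewrite (sumR_map_ext _ (fun j => if ((nHon c - trail c <? j) && (nHon c + 2 <=? j + n1))%nat
                                    then (if (j =? 1)%nat then 1 else g) else 0)).
  2:{ intros j Hj. apply in_seq in Hj.
      destruct ((nHon c - trail c <? j) && (nHon c + 2 <=? j + n1))%nat.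
      - destruct (j =? 1)%nat; simpl orb.
        + apply (bits_const g _ (INR 1)).
        + transitivity (sumR (map (fun bs => bits_prob g bs * (if nth (j-1) bs false then 1 else 0)) (bitlists (nHon c))));
            [|apply bits_nth; lia].
          apply sumR_map_ext. intros bs _.
          destruct (nth (j-1) bs false); simpl; ring.
      - apply (bits_const g _ (INR 0)). }
  rewrite sum_cond by lia.
  rewrite count_cond by (rewrite Hb, Ht; lia).
  rewrite count_le.
  rewrite Hb, Ht.
  replace (Nat.min (S (trail w)) (n1 - 1)) with (Nat.min (S (trail w)) (n1 - 1)) by reflexivity.
  f_equal.
  f_equal.
  destruct (Nat.ltb_spec (S (nHon w) - S (trail w)) 1); destruct (Nat.leb_spec (S (nHon w) + 2) (1 + n1));
    destruct (Nat.leb_spec (nHon w) (trail w)); destruct (Nat.leb_spec (nHon w + 2) n1); simpl; try lia; reflexivity.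
Qed.

Lemma isc_SS u x : is_cycleb (Att::Att::(u++[x])) = miner_eqb x Hon && is_dyck u.
Proof.
  assert (H : forall r, r <> [] -> is_cycleb (Att::Att::r) = miner_eqb (last r Att) Hon && is_dyck (removelast r)).
  { intros [|y r] Hr; [congruence|reflexivity]. }
  rewrite H by (intros E; symmetry in E; apply app_cons_not_nil in E; exact E). rewrite last_last, removelast_last. reflexivity.
Qed.

Lemma cyc_enum (phi : list miner -> R) n :
  sumR (map (fun c => if is_cycleb c then phi c else 0) (words n)) =
  (if (n =? 1)%nat then phi [Hon] else 0) +
  (if (n =? 3)%nat then phi [Att;Hon;Att] + phi [Att;Hon;Hon] else 0) +
  (if (3 <=? n)%nat then sumR (map (fun w => if is_dyck w then phi (Att::Att::w++[Hon]) else 0) (words (n-3))) else 0).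
Proof.
  destruct n as [|[|[|[|m]]]].
  - simpl. lra.
  - simpl. lra.
  - simpl. lra.
  - simpl. lra.
  - rewrite words_S_sum, sumR_map_plus.
    rewrite (sumR_map_zero (fun w => if is_cycleb (Hon :: w) then phi (Hon :: w) else 0)).
    2:{ intros w Hw. apply words_len in Hw. destruct w; [discriminate|]. reflexivity. }
    rewrite words_S_sum, sumR_map_plus.
    rewrite (sumR_map_zero (fun w => if is_cycleb (Att :: Hon :: w) then phi (Att :: Hon :: w) else 0)).
    2:{ intros w Hw. apply words_len in Hw. destruct w as [|x [|y w]]; try discriminate. destruct x; reflexivity. }
    rewrite (words_S_snoc (fun w => if is_cycleb (Att :: Att :: w) then phi (Att :: Att :: w) else 0)).
    cbn [Nat.eqb Nat.leb Nat.sub].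
    rewrite Rplus_0_r, Rplus_0_r, Rplus_0_l, Rplus_0_l.
    apply sumR_map_ext. intros w _. rewrite !isc_SS. simpl. lra.
Qed.

Lemma double_sum {A B} (l1 : list A) (l2 : list B) (f1 u1 : A -> R) (f2 u2 : B -> R) K1 K2 :
  sumR (map (fun x => sumR (map (fun y => K1 * (f1 x * f2 y) + K2 * (u1 x * u2 y)) l2)) l1) =
  K1 * (sumR (map f1 l1) * sumR (map f2 l2)) + K2 * (sumR (map u1 l1) * sumR (map u2 l2)).
Proof.
  induction l1 as [|x l1 IH]; simpl; [ring|]. rewrite IH.
  rewrite (sumR_map_ext _ (fun y => (K1 * f1 x) * f2 y + (K2 * u1 x) * u2 y)) by (intros; ring).
  rewrite sumR_map_plus, !sumR_map_scal. ring.
Qed.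

Definition Dh p q n := sumR (map (cyc_prob p q) (filter is_cycleb (words n))).
Definition Ih p q n := sumR (map (fun c => cyc_prob p q c * INR (Ic c)) (filter is_cycleb (words n))).
Definition Ah p q g n1 n := sumR (map (fun c => cyc_prob p q c * EF g n1 c) (filter is_cycleb (words n))).
Definition Bh p q g n := sumR (map (fun c => cyc_prob p q c * Eh g c) (filter is_cycleb (words n))).

Lemma Uh_term_eq p q g n1 N : (1 <= n1)%nat ->
  Uh_term p q g n1 N = sumR (map (fun k => Ih p q k * Dh p q (N-k) + Ah p q g n1 k * Bh p q g (N-k)) (seq 0 (S N))).
Proof.
  intros Hn1. unfold Uh_term. apply sumR_map_ext. intros k _.
  unfold Ih, Dh, Ah, Bh.
  rewrite <- (Rmult_1_l (_ * _)). rewrite <- (Rmult_1_l (sumR (map (fun c => _ * EF g n1 c) _) * _)).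
  rewrite <- double_sum.
  apply sumR_map_ext. intros c1 Hc1. apply filter_In in Hc1. destruct Hc1 as [_ Hc1].
  apply sumR_map_ext. intros c2 Hc2. apply filter_In in Hc2. destruct Hc2 as [_ Hc2].
  unfold EF, Eh.
  transitivity (sumR (map (fun b1 => sumR (map (fun b2 =>
      (cyc_prob p q c1 * cyc_prob p q c2 * INR (Ic c1)) * (bits_prob g b1 * bits_prob g b2) +
      (cyc_prob p q c1 * cyc_prob p q c2) * ((bits_prob g b1 * INR (Fc n1 c1 b1)) *
         (bits_prob g b2 * (if hc c2 b2 then 1 else 0)))) (bitlists (nHon c2)))) (bitlists (nHon c1)))).
  - apply sumR_map_ext. intros b1 _. apply sumR_map_ext. intros b2 _.
    rewrite Uh_decomp by auto. rewrite plus_INR. destruct (hc c2 b2); simpl; ring.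
  - rewrite double_sum. rewrite !bits_sum1.
    ring.
Qed.

Lemma sum_seq_spike (x : nat -> R) j K : forall s,
  sumR (map (fun k => if (k =? j)%nat then x k else 0) (seq s K)) =
  if ((s <=? j) && (j <? s + K))%nat then x j else 0.
Proof.
  induction K; intros s.
  - cbn [seq map sumR].
    destruct (Nat.leb_spec s j); destruct (Nat.ltb_spec j (s + 0)); simpl; try lia; reflexivity.
  - change (seq s (S K)) with (s :: seq (S s) K). rewrite map_cons.
    change (sumR (?a :: ?l)) with (a + sumR l). rewrite IHK.
    destruct (Nat.eqb_spec s j).
    + subst.
      destruct (Nat.leb_spec (S j) j); destruct (Nat.leb_spec j j); destruct (Nat.ltb_spec j (j + S K));
        destruct (Nat.ltb_spec j (S j + K)); simpl; try lia; ring.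
    + destruct (Nat.leb_spec (S s) j); destruct (Nat.leb_spec s j);
      destruct (Nat.ltb_spec j (S s + K)); destruct (Nat.ltb_spec j (s + S K)); simpl; try lia; ring.
Qed.

Lemma words_single' (P : list miner -> bool) (f : list miner -> R) c0 n :
  P c0 = true -> (forall w, P w = true -> w = c0) ->
  sumR (map (fun w => if P w then f w else 0) (words n)) = if (length c0 =? n)%nat then f c0 else 0.
Proof.
  intros H1 H2. destruct (Nat.eqb_spec (length c0) n).
  - apply words_single; auto.
  - apply words_none. intros w Hw. destruct (P w) eqn:E; auto. apply H2 in E. subst. contradiction.
Qed.

Lemma sum_ind_scal (b : nat -> bool) (c : R) l :
  sumR (map (fun i => if b i then c else 0) l) = c * sumR (map (fun i => INR (if b i then 1%nat else 0%nat)) l).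
Proof. induction l; simpl; [ring|]. rewrite IHl. destruct (b a); simpl; ring. Qed.

Lemma Ih_eq p q n : Ih p q n = if (n =? 3)%nat then q * p * p else 0.
Proof.
  unfold Ih. rewrite sumR_filter, cyc_enum.
  rewrite (sumR_map_zero (fun w => if is_dyck w then _ else 0)).
  2:{ intros w _. destruct (is_dyck w); simpl; ring. }
  replace (if (3 <=? n)%nat then 0 else 0) with 0 by (destruct (3 <=? n)%nat; reflexivity).
  destruct (n =? 1)%nat, (n =? 3)%nat; simpl; ring.
Qed.

Lemma Bh_eq p q g n : Bh p q g n = (if (n =? 1)%nat then p else 0) + (if (n =? 3)%nat then q * p * p * (1 - g) else 0).
Proof.
  unfold Bh. rewrite sumR_filter, cyc_enum.
  rewrite (sumR_map_zero (fun w => if is_dyck w then _ else 0)).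
  2:{ intros w _. destruct (is_dyck w); [|reflexivity].
      unfold Eh. rewrite sumR_map_zero; [ring|]. intros bs _. simpl. ring. }
  assert (E1 : Eh g [Hon] = 1) by (unfold Eh; simpl; ring).
  assert (E2 : Eh g [Att;Hon;Att] = 0) by (unfold Eh; simpl; ring).
  assert (E3 : Eh g [Att;Hon;Hon] = 1 - g) by (unfold Eh; simpl; ring).
  rewrite E1, E2, E3. simpl cyc_prob.
  replace (if (3 <=? n)%nat then 0 else 0) with 0 by (destruct (3 <=? n)%nat; reflexivity).
  destruct (n =? 1)%nat, (n =? 3)%nat; simpl; ring.
Qed.

Lemma Dh_eq p q n : Dh p q n = (if (n =? 1)%nat then p else 0) + (if (n =? 3)%nat then q * p * q + q * p * p else 0)
  + (if (3 <=? n)%nat then q * q * p * G p q (n - 3) 0 else 0).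
Proof.
  unfold Dh. rewrite <- (sumR_map_ext (fun c => if is_cycleb c then cyc_prob p q c else 0) _ (filter _ _)).
  2:{ intros c Hc. apply filter_In in Hc. destruct Hc as [_ ->]. reflexivity. }
  rewrite sumR_filter. rewrite (sumR_map_ext (fun x => if is_cycleb x then if is_cycleb x then cyc_prob p q x else 0 else 0)
      (fun x => if is_cycleb x then cyc_prob p q x else 0)) by (intros x _; destruct (is_cycleb x); reflexivity).
  rewrite cyc_enum. f_equal.
  - destruct (n =? 1)%nat, (n =? 3)%nat; simpl; ring.
  - destruct (3 <=? n)%nat; [|reflexivity]. unfold G. rewrite <- sumR_map_scal. apply sumR_map_ext.
    intros w _. unfold is_dyck. destruct (dyck_aux 0 w); [|ring].
    simpl. rewrite cyc_prob_app. simpl. ring.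
Qed.

Definition Gh p q g n1 m := sumR (map (fun w => if is_dyck w then cyc_prob p q w *
   (g * INR (list_sum (map (fun i => if (i <=? trail w)%nat then 1%nat else 0%nat) (seq 0 (n1 - 1))))
    + (1 - g) * (if ((nHon w <=? trail w) && (nHon w + 2 <=? n1))%nat then 1 else 0)) else 0) (words m)).

Lemma Ah_eq p q g n1 n : Ah p q g n1 n = if (3 <=? n)%nat then q * q * p * Gh p q g n1 (n - 3) else 0.
Proof.
  unfold Ah. rewrite <- (sumR_map_ext (fun c => if is_cycleb c then cyc_prob p q c * EF g n1 c else 0) _ (filter _ _)).
  2:{ intros c Hc. apply filter_In in Hc. destruct Hc as [_ ->]. reflexivity. }
  rewrite sumR_filter. rewrite (sumR_map_ext (fun x => if is_cycleb x then if is_cycleb x then cyc_prob p q x * EF g n1 x else 0 else 0)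
      (fun x => if is_cycleb x then cyc_prob p q x * EF g n1 x else 0)) by (intros x _; destruct (is_cycleb x); reflexivity).
  rewrite cyc_enum.
  assert (E1 : EF g n1 [Hon] = 0) by (unfold EF; simpl; ring).
  assert (E2 : EF g n1 [Att;Hon;Att] = 0) by (unfold EF; simpl; ring).
  assert (E3 : EF g n1 [Att;Hon;Hon] = 0) by (unfold EF; simpl; ring).
  rewrite E1, E2, E3.
  replace ((if (n =? 1)%nat then cyc_prob p q [Hon] * 0 else 0) +
    (if (n =? 3)%nat then cyc_prob p q [Att; Hon; Att] * 0 + cyc_prob p q [Att; Hon; Hon] * 0 else 0)) with 0
    by (destruct (n =? 1)%nat, (n =? 3)%nat; ring).
  rewrite Rplus_0_l. destruct (3 <=? n)%nat; [|reflexivity].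
  unfold Gh. rewrite <- sumR_map_scal. apply sumR_map_ext. intros w _.
  destruct (is_dyck w); [|ring]. rewrite EF_SS. simpl cyc_prob. rewrite cyc_prob_app. simpl. ring.
Qed.

Definition Hh p q i m := sumR (map (fun w => if is_dyck w && (i <=? trail w)%nat then cyc_prob p q w else 0) (words m)).
Definition Eg p q n1 m := sumR (map (fun w => if is_dyck w && ((nHon w <=? trail w) && (nHon w + 2 <=? n1))%nat
                                                then cyc_prob p q w else 0) (words m)).

Lemma Gh_split p q g n1 m : Gh p q g n1 m =
  g * sumR (map (fun i => Hh p q i m) (seq 0 (n1 - 1))) + (1 - g) * Eg p q n1 m.
Proof.
  unfold Gh, Hh, Eg.
  rewrite <- sumR_swap, <- !sumR_map_scal, <- sumR_map_plus.
  apply sumR_map_ext. intros w _.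
  destruct (is_dyck w); simpl andb.
  - rewrite INR_list_sum. rewrite (sum_ind_scal (fun i => (i <=? trail w)%nat) (cyc_prob p q w)).
    destruct ((nHon w <=? trail w) && (nHon w + 2 <=? n1))%nat; ring.
  - rewrite sumR_map_zero by (intros; reflexivity). ring.
Qed.

Lemma dyck_aux_repA k i v : dyck_aux k (repeat Att i ++ v) = dyck_aux (k + i) v.
Proof. revert k; induction i; intros k; simpl; [rewrite Nat.add_0_r; reflexivity|]. rewrite IHi. f_equal. lia. Qed.

Lemma cp_repA p q i : cyc_prob p q (repeat Att i) = q ^ i.
Proof. induction i; simpl; [reflexivity|]. rewrite IHi. reflexivity. Qed.

Lemma Hh_eq p q i m : Hh p q i m = if (i <=? m)%nat then q ^ i * G p q (m - i) i else 0.
Proof.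
  unfold Hh. rewrite words_rs_sum.
  rewrite (sumR_map_ext _ (fun w => if (i <=? leadA w)%nat then (if is_dyck w then cyc_prob p q w else 0) else 0)).
  2:{ intros w _. rewrite is_dyck_rs, trail_rs. destruct (is_dyck w) eqn:E; destruct (i <=? leadA w)%nat; simpl; auto.
      apply cyc_prob_rs_dyck; auto. }
  rewrite words_prefix. destruct (i <=? m)%nat; [|reflexivity].
  unfold G. rewrite <- sumR_map_scal. apply sumR_map_ext. intros v _.
  unfold is_dyck. rewrite dyck_aux_repA. simpl Nat.add. destruct (dyck_aux i v); [|ring].
  rewrite cyc_prob_app, cp_repA. reflexivity.
Qed.

Fixpoint leqb (u v : list miner) : bool :=
  match u, v with [], [] => true | x::u', y::v' => miner_eqb x y && leqb u' v' | _, _ => false end.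
Lemma leqb_true u : forall v, leqb u v = true <-> u = v.
Proof.
  induction u as [|x u IH]; intros [|y v]; simpl; split; intros H; try congruence; auto.
  - apply andb_prop in H. destruct H as [H1 H2]. apply miner_eqb_true in H1. apply IH in H2. congruence.
  - injection H as -> ->. apply andb_true_intro. split; [apply miner_eqb_true; auto| apply IH; auto].
Qed.

Definition AkHk k := repeat Att k ++ repeat Hon k.

Lemma dyck_aux_repH k t : dyck_aux k (repeat Hon t) = (k =? t)%nat.
Proof. revert k; induction t; intros k; destruct k; simpl; auto. Qed.

Lemma AkHk_dyck k : is_dyck (AkHk k) = true.
Proof. unfold is_dyck, AkHk. rewrite dyck_aux_repA, dyck_aux_repH. simpl. apply Nat.eqb_refl. Qed.

Lemma AkHk_nHon k : nHon (AkHk k) = k.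
Proof. change (cnt Hon (AkHk k) = k). unfold AkHk. rewrite cnt_app, !cnt_repeat. simpl. lia. Qed.

Lemma AkHk_trail k : trail (AkHk k) = k.
Proof.
  destruct k; [reflexivity|]. unfold AkHk.
  replace (repeat Att (S k)) with (repeat Att k ++ [Att]) by (rewrite <- repeat_cons; reflexivity).
  rewrite <- app_assoc. apply trail_of.
Qed.

Lemma AkHk_len k : length (AkHk k) = (k + k)%nat.
Proof. unfold AkHk. rewrite length_app, !repeat_length. reflexivity. Qed.

Lemma AkHk_cp p q k : cyc_prob p q (AkHk k) = (p * q) ^ k.
Proof. unfold AkHk. rewrite cyc_prob_app, cp_repA, cyc_prob_cnt, !cnt_repeat. simpl.
  rewrite Rpow_mult_distr. ring. Qed.

Lemma cntH0 u : cnt Hon u = 0%nat -> u = repeat Att (length u).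
Proof.
  induction u as [|x u IH]; simpl; auto. rewrite cnt_cons. destruct x; simpl; intros H; [|lia].
  f_equal. apply IH. lia.
Qed.

Lemma cond_char n1 w : is_dyck w && ((nHon w <=? trail w) && (nHon w + 2 <=? n1))%nat = true ->
  w = AkHk (nHon w).
Proof.
  intros H. apply andb_prop in H. destruct H as [Hd H]. apply andb_prop in H. destruct H as [H1 H2].
  apply Nat.leb_le in H1. pose proof (dyck_cnt w Hd) as Hc.
  change (nHon w) with (cnt Hon w) in *.
  destruct (Nat.eq_dec (cnt Att w) 0) as [E|E].
  - assert (length w = 0%nat) by (rewrite cnt_len; lia). destruct w; [|discriminate].
    reflexivity.
  - destruct (trail_decomp w ltac:(lia)) as [u' Hu].
    set (t := trail w) in *. clearbody t.
    assert (Cw : cnt Hon w = (cnt Hon u' + t)%nat).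
    { rewrite Hu, !cnt_app, cnt_repeat. change (cnt Hon [Att]) with 0%nat. simpl. lia. }
    assert (Ca : cnt Att w = (cnt Att u' + 1)%nat).
    { rewrite Hu, !cnt_app, cnt_repeat. change (cnt Att [Att]) with 1%nat. simpl. lia. }
    assert (Hu0 : cnt Hon u' = 0%nat) by lia.
    pose proof (cntH0 u' Hu0) as Hr. pose proof (cnt_len u') as Hl.
    rewrite Cw, Hu0. simpl. rewrite Hu.
    assert (t = S (length u')) by lia. subst t.
    unfold AkHk. rewrite Hr at 1.
    rewrite app_assoc. f_equal. rewrite <- repeat_cons. reflexivity.
Qed.

Lemma Eg_eq p q n1 m : Eg p q n1 m = sumR (map (fun k => if (m =? k + k)%nat then (p * q) ^ k else 0) (seq 0 (n1 - 1))).
Proof.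
  unfold Eg.
  rewrite (sumR_map_ext _ (fun w => sumR (map (fun k => if leqb w (AkHk k) then cyc_prob p q w else 0) (seq 0 (n1 - 1))))).
  - rewrite sumR_swap. apply sumR_map_ext. intros k _.
    rewrite (words_single' (fun w => leqb w (AkHk k)) (cyc_prob p q) (AkHk k)).
    + rewrite AkHk_len, AkHk_cp. rewrite Nat.eqb_sym. reflexivity.
    + apply leqb_true; reflexivity.
    + intros w Hw. apply leqb_true; auto.
  - intros w _. destruct (is_dyck w && ((nHon w <=? trail w) && (nHon w + 2 <=? n1)))%nat eqn:E.
    + apply cond_char in E as Ew.
      assert (Hk : (nHon w + 2 <= n1)%nat).
      { apply andb_prop in E. destruct E as [_ E]. apply andb_prop in E. destruct E as [_ E]. apply Nat.leb_le; auto. }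
      rewrite (sumR_map_ext _ (fun k => if (k =? nHon w)%nat then cyc_prob p q w else 0)).
      * rewrite sum_seq_spike. destruct (Nat.leb_spec 0 (nHon w)); destruct (Nat.ltb_spec (nHon w) (0 + (n1 - 1))); simpl; try lia; auto.
      * intros k _. destruct (leqb w (AkHk k)) eqn:E2; destruct (Nat.eqb_spec k (nHon w)); auto.
        -- apply leqb_true in E2. exfalso. apply n. rewrite E2. symmetry. apply AkHk_nHon.
        -- exfalso. subst k. rewrite <- Ew in E2. assert (leqb w w = true) by (apply leqb_true; auto). congruence.
    + symmetry. apply sumR_map_zero. intros k Hk. apply in_seq in Hk.
      destruct (leqb w (AkHk k)) eqn:E2; auto. apply leqb_true in E2. subst w.
      rewrite AkHk_dyck, AkHk_nHon, AkHk_trail in E. rewrite Nat.leb_refl in E.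
      destruct (Nat.leb_spec (k + 2) n1); [discriminate|lia].
Qed.

Lemma Dh_sum p q : 0 < q -> q < p -> p + q = 1 -> infinite_sum (Dh p q) 1.
Proof.
  intros Hq Hpq Hs.
  assert (H3 : infinite_sum (fun n => (if (n =? 1)%nat then p else 0) + (if (n =? 3)%nat then q*p*q + q*p*p else 0)
      + (if (3 <=? n)%nat then q*q*p * G p q (n-3) 0 else 0)) (p + (q*p*q + q*p*p) + q*q*p*(1/p))).
  { apply IS_plus; [apply IS_plus; apply IS_spike|].
    apply (IS_shift (fun n => q*q*p * G p q n 0)). apply IS_scal. apply G_sum; auto. }
  replace 1 with (p + (q*p*q + q*p*p) + q*q*p*(1/p)).
  - eapply IS_ext; [|exact H3]. intros n. rewrite Dh_eq. reflexivity.
  - replace (q*q*p*(1/p)) with (q*q) by (field; lra). replace p with (1 - q) by lra. ring.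
Qed.

Lemma Hh_sum p q i : 0 < q -> q < p -> p + q = 1 -> infinite_sum (Hh p q i) (q ^ i * (1 / p)).
Proof.
  intros Hq Hpq Hs.
  assert (H := IS_shift _ _ i (IS_scal (q ^ i) _ _ (G_sum p q Hq Hpq Hs i))).
  eapply IS_ext; [|exact H]. intros n. rewrite Hh_eq. reflexivity.
Qed.

Lemma Eg_sum p q n1 : infinite_sum (Eg p q n1) (sumR (map (fun k => (p * q) ^ k) (seq 0 (n1 - 1)))).
Proof.
  assert (H := IS_finsum (fun k n => if (n =? k + k)%nat then (p * q) ^ k else 0) (fun k => (p * q) ^ k)
                 (seq 0 (n1 - 1)) (fun k _ => IS_spike (k + k) ((p * q) ^ k))).
  eapply IS_ext; [|exact H]. intros n. rewrite Eg_eq. reflexivity.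
Qed.

Definition GhVal p q g n1 := g * sumR (map (fun i => q ^ i * (1 / p)) (seq 0 (n1 - 1)))
  + (1 - g) * sumR (map (fun k => (p * q) ^ k) (seq 0 (n1 - 1))).

Lemma Gh_sum p q g n1 : 0 < q -> q < p -> p + q = 1 -> infinite_sum (Gh p q g n1) (GhVal p q g n1).
Proof.
  intros Hq Hpq Hs.
  assert (H := IS_plus _ _ _ _
     (IS_scal g _ _ (IS_finsum (fun i m => Hh p q i m) (fun i => q ^ i * (1 / p)) (seq 0 (n1 - 1))
                      (fun i _ => Hh_sum p q i Hq Hpq Hs)))
     (IS_scal (1 - g) _ _ (Eg_sum p q n1))).
  eapply IS_ext; [|exact H]. intros n. rewrite Gh_split. reflexivity.
Qed.

Lemma Ah_sum p q g n1 : 0 < q -> q < p -> p + q = 1 -> infinite_sum (Ah p q g n1) (q * q * p * GhVal p q g n1).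
Proof.
  intros Hq Hpq Hs.
  assert (H := IS_shift _ _ 3 (IS_scal (q * q * p) _ _ (Gh_sum p q g n1 Hq Hpq Hs))).
  eapply IS_ext; [|exact H]. intros n. rewrite Ah_eq. reflexivity.
Qed.

Lemma sum_rev_spike N j (f : nat -> R) :
  sumR (map (fun k => if (N - k =? j)%nat then f k else 0) (seq 0 (S N))) = if (j <=? N)%nat then f (N - j)%nat else 0.
Proof.
  rewrite (sumR_map_ext _ (fun k => if (k =? N - j)%nat then (if (j <=? N)%nat then f k else 0) else 0)).
  - rewrite sum_seq_spike. destruct (Nat.leb_spec j N).
    + destruct (Nat.leb_spec 0 (N - j)); destruct (Nat.ltb_spec (N - j) (0 + S N)); simpl; try lia; reflexivity.
    + destruct ((0 <=? N - j) && (N - j <? 0 + S N))%nat; reflexivity.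
  - intros k Hk. apply in_seq in Hk.
    destruct (Nat.eqb_spec (N - k) j); destruct (Nat.eqb_spec k (N - j)); destruct (Nat.leb_spec j N);
      try lia; reflexivity.
Qed.

Lemma Uh_term_pt p q g n1 N : (1 <= n1)%nat ->
  Uh_term p q g n1 N =
  (if (3 <=? N)%nat then q * p * p * Dh p q (N - 3) else 0) +
  (if (1 <=? N)%nat then p * Ah p q g n1 (N - 1) else 0) +
  (if (3 <=? N)%nat then q * p * p * (1 - g) * Ah p q g n1 (N - 3) else 0).
Proof.
  intros Hn1. rewrite Uh_term_eq by auto. rewrite sumR_map_plus.
  rewrite (sumR_map_ext (fun k => Ih p q k * Dh p q (N - k)) (fun k => if (k =? 3)%nat then q * p * p * Dh p q (N - k) else 0)).
  2:{ intros k _. rewrite Ih_eq. destruct (k =? 3)%nat; ring. }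
  rewrite sum_seq_spike.
  rewrite (sumR_map_ext (fun k => Ah p q g n1 k * Bh p q g (N - k))
     (fun k => (if (N - k =? 1)%nat then p * Ah p q g n1 k else 0) + (if (N - k =? 3)%nat then q * p * p * (1 - g) * Ah p q g n1 k else 0))).
  2:{ intros k _. rewrite Bh_eq. destruct (N - k =? 1)%nat, (N - k =? 3)%nat; ring. }
  rewrite sumR_map_plus, !sum_rev_spike.
  rewrite Rplus_assoc. f_equal.
  all: try (destruct (Nat.leb_spec 3 N); destruct (Nat.ltb_spec 3 (0 + S N)); simpl; try lia; reflexivity).
Qed.

Theorem proposition9 (p q g : R) (n1 : nat) :
  0 < q -> q < p -> p + q = 1 -> 0 <= g <= 1 -> (2 <= n1)%nat ->
  infinite_sum (Uh_term p q g n1)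
    (p ^ 2 * q
     + (p + (1 - g) * p ^ 2 * q)
       * (q ^ 2 / p * (1 - q ^ (n1 - 1)) * g
          + (1 - g) * p * q ^ 2 * ((1 - (p * q) ^ (n1 - 1)) / (1 - p * q)))).
Proof.
  intros Hq Hpq Hs Hg Hn1.
  assert (HD := IS_shift _ _ 3 (IS_scal (q * p * p) _ _ (Dh_sum p q Hq Hpq Hs))).
  assert (HA1 := IS_shift _ _ 1 (IS_scal p _ _ (Ah_sum p q g n1 Hq Hpq Hs))).
  assert (HA3 := IS_shift _ _ 3 (IS_scal (q * p * p * (1 - g)) _ _ (Ah_sum p q g n1 Hq Hpq Hs))).
  assert (H := IS_plus _ _ _ _ (IS_plus _ _ _ _ HD HA1) HA3).
  assert (Hv : q * p * p * 1 + p * (q * q * p * GhVal p q g n1) + q * p * p * (1 - g) * (q * q * p * GhVal p q g n1) =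
    p ^ 2 * q
     + (p + (1 - g) * p ^ 2 * q)
       * (q ^ 2 / p * (1 - q ^ (n1 - 1)) * g
          + (1 - g) * p * q ^ 2 * ((1 - (p * q) ^ (n1 - 1)) / (1 - p * q)))).
  { unfold GhVal.
    rewrite (sumR_map_ext (fun i => q ^ i * (1 / p)) (fun i => (1 / p) * q ^ i)) by (intros; ring).
    rewrite sumR_map_scal, !geom_sum.
    - assert (Hpq1 : p * q < 1) by nra.
      replace (1 - q) with p by lra. field. split; lra.
    - intros E. nra.
    - lra. }
  rewrite <- Hv.
  eapply IS_ext; [|exact H]. intros n. rewrite Uh_term_pt by lia. reflexivity.
Qed.
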